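(* Let $n$ be a principal, $P'\subseteq\mathsf{Privileges}$, and $S$ a (possibly empty) list such that $\langle n,P'\rangle::S\in\mathsf{Stacks}$. Let $e$ be a standard expression with $D\vdash e:t$, and let $h\in[\![D]\!]$, $h'\in[\![D]\!]_s$. Put $P=\mathsf{privs}(\langle n,P'\rangle::S)$, $u=[\![D\vdash e:t]\!]\,n\,P\,h$ and $u'=[\![D\vdash e:t]\!]_s(\langle n,P'\rangle::S)\,h'$. Then $\mathsf{sim}\,D\,h\,h'$ implies $\mathsf{sim}\,t\,u\,u'$.
   Context: Fix sets $\mathsf{Principals}$ and $\mathsf{Privileges}$ and an access control list $\mathcal{A}:\mathsf{Principals}\to\mathcal{P}(\mathsf{Privileges})$. Language. Types: $t::=\mathtt{bool}\mid t_1\to t_2$. Expressions: $e::=\mathtt{true}\mid x\mid \mathtt{if}\ e\ \mathtt{then}\ e_1\ \mathtt{else}\ e_2\mid \lambda x.e\mid e_1\,e_2\mid \mathtt{letrec}\ f(x)=e_1\ \mathtt{in}\ e_2\mid \mathtt{signs}\ n\ e\mid \mathtt{dopriv}\ p\ \mathtt{in}\ e\mid \mathtt{check}\ p\ \mathtt{for}\ e\mid \mathtt{test}\ p\ \mathtt{then}\ e_1\ \mathtt{else}\ e_2$ ($n$ a principal, $p$ a privilege). Typing $D\vdash e:t$ is simply typed: $\mathtt{letrec}$ typed by $D,f:t_1\to t_2,x:t_1\vdash e_1:t_2$ and $D,f:t_1\to t_2\vdash e_2:t$; $\mathtt{signs},\mathtt{dopriv},\mathtt{check}$ preserve the body type;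 $\mathtt{test}$, $\mathtt{if}$ need branches of a common type ($\mathtt{if}$ a $\mathtt{bool}$ guard). An expression is standard if for every subexpression $\lambda x.e$ or $\mathtt{letrec}\ f(x)=e\ \mathtt{in}\ e_1$, the body $e$ is of the form $\mathtt{signs}\ n\ e'$. Common. $\bot,\star$ are two distinct values, neither booleans nor functions. For a cpo $C$, $C_{\bot\star}=C\cup\{\bot,\star\}$ with $u\le v$ iff $u=\bot$ or $u=v$ or $u,v\in C$, $u\le v$. ''let $d=E_1$ in $E_2$'' yields $E_1$ if $E_1\in\{\bot,\star\}$, else $E_2$ with $d:=E_1$; $\mathit{fix}$ is least fixed point. Eager semantics. $[\![\mathtt{bool}]\!]=\{\mathsf{true},\mathsf{false}\}$ and $\mathcal{P}(\mathsf{Privileges})$ ordered by equality; $[\![t_1\to t_2]\!]=\mathcal{P}(\mathsf{Privileges})\to[\![t_1]\!]\to[\![t_2]\!]_{\bot\star}$ (continuous, pointwise). $[\![D]\!]$: records $h$ with $h.x\in[\![D(x)]\!]$. $[\![D\vdash e:t]\!]\in\mathsf{Principals}\to\mathcal{P}(\mathsf{Privileges})\to[\![D]\!]\to[\![t]\!]_{\bot\star}$, written $[\![e]\!]nPh$. $P\sqcup_n\{p\}$ is $P\cup\{p\}$ if $p\in\mathcal{A}(n)$, else $P$. Equations: $[\![\mathtt{true}]\!]nPh=\mathsf{true}$; $[\![x]\!]nPh=h.x$; $[\![\mathtt{if}\ e\ \mathtt{then}\ e_1\ \mathtt{else}\ e_2]\!]nPh=$ let $b=[\![e]\!]nPh$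 in (if $b$ then $[\![e_1]\!]nPh$ else $[\![e_2]\!]nPh$); $[\![\lambda x.e]\!]nPh=\lambda P'.\lambda d.[\![e]\!]nP'(h[x\mapsto d])$; $[\![e_1e_2]\!]nPh=$ let $f=[\![e_1]\!]nPh$ in let $d=[\![e_2]\!]nPh$ in $fPd$; $[\![\mathtt{letrec}\ f(x)=e_1\ \mathtt{in}\ e_2]\!]nPh=[\![e_2]\!]nP(h[f\mapsto\mathit{fix}\,G])$ with $G(g)=\lambda P'.\lambda d.[\![e_1]\!]nP'(h[f\mapsto g,x\mapsto d])$; $[\![\mathtt{signs}\ n'\ e]\!]nPh=[\![e]\!]n'(P\cap\mathcal{A}(n'))h$; $[\![\mathtt{dopriv}\ p\ \mathtt{in}\ e]\!]nPh=[\![e]\!]n(P\sqcup_n\{p\})h$; $[\![\mathtt{check}\ p\ \mathtt{for}\ e]\!]nPh=$ if $p\in P$ then $[\![e]\!]nPh$ else $\star$; $[\![\mathtt{test}\ p\ \mathtt{then}\ e_1\ \mathtt{else}\ e_2]\!]nPh=$ if $p\in P$ then $[\![e_1]\!]nPh$ else $[\![e_2]\!]nPh$. Stacks. $\mathsf{Stacks}$ is the set of nonempty lists of pairs $\langle n,P\rangle\in\mathsf{Principals}\times\mathcal{P}(\mathsf{Privileges})$, ordered by equality; $::$ is cons (head = top). $\mathsf{check}(p,\mathrm{nil})$ is false and $\mathsf{check}(p,\langle n,P\rangle::S)$ iff $p\in\mathcal{A}(n)\wedge(p\in P\vee\mathsf{check}(p,S))$. $\mathsf{privs}(S)=\{p:\mathsf{check}(p,S)\}$.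 Stack semantics. $[\![\mathtt{bool}]\!]_s=\{\mathsf{true},\mathsf{false}\}$, $[\![t_1\to t_2]\!]_s=\mathsf{Stacks}\to[\![t_1]\!]_s\to([\![t_2]\!]_s)_{\bot\star}$; $[\![D]\!]_s$: records $h$ with $h.x\in[\![D(x)]\!]_s$; $[\![D\vdash e:t]\!]_s\in\mathsf{Stacks}\to[\![D]\!]_s\to([\![t]\!]_s)_{\bot\star}$, written $[\![e]\!]_sSh$: $[\![\mathtt{true}]\!]_sSh=\mathsf{true}$; $[\![x]\!]_sSh=h.x$; $\mathtt{if}$: let $b=[\![e]\!]_sSh$ in (if $b$ then $[\![e_1]\!]_sSh$ else $[\![e_2]\!]_sSh$); $[\![\lambda x.e]\!]_sSh=\lambda S'.\lambda d.[\![e]\!]_sS'(h[x\mapsto d])$; $[\![e_1e_2]\!]_sSh=$ let $f=[\![e_1]\!]_sSh$ in let $d=[\![e_2]\!]_sSh$ in $fSd$; $[\![\mathtt{letrec}\ f(x)=e_1\ \mathtt{in}\ e_2]\!]_sSh=[\![e_2]\!]_sS(h[f\mapsto\mathit{fix}\,G])$ with $G(g)=\lambda S'.\lambda d.[\![e_1]\!]_sS'(h[f\mapsto g,x\mapsto d])$; $[\![\mathtt{signs}\ n'\ e]\!]_sSh=[\![e]\!]_s(\langle n',\varnothing\rangle::S)h$; $[\![\mathtt{dopriv}\ p\ \mathtt{in}\ e]\!]_s(\langle n,P\rangle::S)h=[\![e]\!]_s(\langle n,P\cup\{p\}\rangle::S)h$; $[\![\mathtt{check}\ p\ \mathtt{for}\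 e]\!]_sSh=$ if $\mathsf{check}(p,S)$ then $[\![e]\!]_sSh$ else $\star$; $[\![\mathtt{test}\ p\ \mathtt{then}\ e_1\ \mathtt{else}\ e_2]\!]_sSh=$ if $\mathsf{check}(p,S)$ then $[\![e_1]\!]_sSh$ else $[\![e_2]\!]_sSh$. Relation $\mathsf{sim}\,t\subseteq[\![t]\!]_{\bot\star}\times([\![t]\!]_s)_{\bot\star}$: $\mathsf{sim}\,t\,d\,d'$ is true if $d=d'\in\{\bot,\star\}$, false if $d\ne d'$ and one of them is in $\{\bot,\star\}$; otherwise $\mathsf{sim}\,\mathtt{bool}\,b\,b'$ iff $b=b'$, and $\mathsf{sim}(t_1\to t_2)\,f\,f'$ iff for all $S\in\mathsf{Stacks}$, $d\in[\![t_1]\!]$, $d'\in[\![t_1]\!]_s$: $\mathsf{sim}\,t_1\,d\,d'$ implies $\mathsf{sim}\,t_2\,(f(\mathsf{privs}\,S)d)\,(f'Sd')$. For environments, $\mathsf{sim}\,D\,h\,h'$ iff $\mathsf{sim}(D(x))(h.x)(h'.x)$ for all $x$ in the domain of $h$. *)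

(* Defs.v *)
From Stdlib Require Import ClassicalEpsilon List Arith.

Set Implicit Arguments.

Inductive ty : Type := TBool | TArr (t1 t2 : ty).

Inductive lift (A : Type) : Type := Bot | Star | Val (a : A).
Arguments Bot {A}. Arguments Star {A}. Arguments Val {A} a.

Definition liftle {A} (R : A -> A -> Prop) (u v : lift A) : Prop :=
  match u, v with
  | Bot, _ => True
  | Star, Star => True
  | Val a, Val b => R a b
  | _, _ => False
  end.

Definition liftelem {A} (E : A -> Prop) (u : lift A) : Prop :=
  match u with Val a => E a | _ => True end.

Definition is_lub {A} (E : A -> Prop) (R : A -> A -> Prop) (c : nat -> A) (l : A) : Prop :=
  E l /\ (forall k, R (c k) l) /\ (forall u, E u -> (forall k, R (c k) u) -> R l u).

Definition bind {A B} (u : lift A) (k : A -> lift B) : lift B :=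
  match u with Bot => Bot | Star => Star | Val a => k a end.

Definition var := nat.
Definition ctx := var -> option ty.
Definition upd (D : ctx) (x : var) (t : ty) : ctx :=
  fun y => if Nat.eq_dec y x then Some t else D y.

Section Domains.
(* X is the type of the extra argument of functions: P(Privileges) for the
   eager semantics, Stacks for the stack semantics (both ordered by equality). *)
Variable X : Type.

(* raw carriers; the actual cpo [[t]] is the subset cut out by [elem t] *)
Fixpoint raw (t : ty) : Type :=
  match t with
  | TBool => bool
  | TArr t1 t2 => X -> raw t1 -> lift (raw t2)
  end.

Fixpoint le (t : ty) : raw t -> raw t -> Prop :=
  match t return raw t -> raw t -> Prop with
  | TBool => fun a b => a = b
  | TArr t1 t2 => fun f g =>
      forall (P : X) (d : raw t1), elem t1 d -> liftle (le t2) (f P d) (g P d)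
  end
with elem (t : ty) : raw t -> Prop :=
  match t return raw t -> Prop with
  | TBool => fun _ => True
  | TArr t1 t2 => fun f => forall P : X,
      (forall d, elem t1 d -> liftelem (elem t2) (f P d)) /\
      (forall d d', elem t1 d -> elem t1 d' -> le t1 d d' ->
          liftle (le t2) (f P d) (f P d')) /\
      (forall (c : nat -> raw t1) (l : raw t1),
          (forall k, elem t1 (c k)) -> (forall k, le t1 (c k) (c (S k))) ->
          is_lub (elem t1) (le t1) c l ->
          is_lub (liftelem (elem t2)) (liftle (le t2)) (fun k => f P (c k)) (f P l))
  end.

Definition raw_inh (t : ty) : raw t :=
  match t return raw t with
  | TBool => true
  | TArr t1 t2 => fun _ _ => Bot
  end.

Definition is_lfp (t : ty) (G : raw t -> raw t) (g : raw t) : Prop :=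
  elem t g /\ le t (G g) g /\ le t g (G g) /\
  (forall g', elem t g' -> le t (G g') g' -> le t g' (G g') -> le t g g').

Definition fixp (t : ty) (G : raw t -> raw t) : raw t :=
  epsilon (inhabits (raw_inh t)) (is_lfp t G).

Definition envty (o : option ty) : Type :=
  match o with Some t => raw t | None => unit end.
Definition env (D : ctx) : Type := forall x : var, envty (D x).

Definition envelem (D : ctx) (h : env D) : Prop :=
  forall x, match D x as o return envty o -> Prop with
            | Some t => elem t
            | None => fun _ => True
            end (h x).

Definition extend (D : ctx) (h : env D) (x : var) (t : ty) (d : raw t)
  : env (upd D x t) :=
  fun y => match Nat.eq_dec y x as b
                 return envty (if b then Some t else D y) with
           | left _ => d
           | right _ => h y
           end.

End Domains.

Section Language.
Variables Principal Privilege : Type.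

Inductive exp : Type :=
| ETrue
| EVar (x : var)
| EIf (e e1 e2 : exp)
| ELam (x : var) (e : exp)
| EApp (e1 e2 : exp)
| ELetrec (f x : var) (e1 e2 : exp)
| ESigns (n : Principal) (e : exp)
| EDopriv (p : Privilege) (e : exp)
| ECheck (p : Privilege) (e : exp)
| ETest (p : Privilege) (e1 e2 : exp).

Inductive has_type : ctx -> exp -> ty -> Type :=
| T_True D : has_type D ETrue TBool
| T_Var D x t : D x = Some t -> has_type D (EVar x) t
| T_If D e e1 e2 t :
    has_type D e TBool -> has_type D e1 t -> has_type D e2 t -> has_type D (EIf e e1 e2) t
| T_Lam D x e t1 t2 :
    has_type (upd D x t1) e t2 -> has_type D (ELam x e) (TArr t1 t2)
| T_App D e1 e2 t1 t2 :
    has_type D e1 (TArr t1 t2) -> has_type D e2 t1 -> has_type D (EApp e1 e2) t2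
| T_Letrec D f x e1 e2 t1 t2 t :
    has_type (upd (upd D f (TArr t1 t2)) x t1) e1 t2 ->
    has_type (upd D f (TArr t1 t2)) e2 t ->
    has_type D (ELetrec f x e1 e2) t
| T_Signs D n e t : has_type D e t -> has_type D (ESigns n e) t
| T_Dopriv D p e t : has_type D e t -> has_type D (EDopriv p e) t
| T_Check D p e t : has_type D e t -> has_type D (ECheck p e) t
| T_Test D p e1 e2 t :
    has_type D e1 t -> has_type D e2 t -> has_type D (ETest p e1 e2) t.

Definition is_signs (e : exp) : Prop :=
  match e with ESigns _ _ => True | _ => False end.

Fixpoint standard (e : exp) : Prop :=
  match e with
  | ETrue | EVar _ => True
  | EIf e0 e1 e2 => standard e0 /\ standard e1 /\ standard e2
  | ELam _ b => is_signs b /\ standard b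
  | EApp e1 e2 => standard e1 /\ standard e2
  | ELetrec _ _ b e2 => is_signs b /\ standard b /\ standard e2
  | ESigns _ b | EDopriv _ b | ECheck _ b => standard b
  | ETest _ e1 e2 => standard e1 /\ standard e2
  end.

Definition Pset := Privilege -> Prop.

Variable ACL : Principal -> Pset.

(* Stacks: nonempty lists of pairs <n,P>, head = top *)
Record stack : Type := MkStack { stop : Principal * Pset; srest : list (Principal * Pset) }.

Fixpoint checkl (p : Privilege) (l : list (Principal * Pset)) : Prop :=
  match l with
  | nil => False
  | (n, P) :: l' => ACL n p /\ (P p \/ checkl p l')
  end.

Definition scheck (p : Privilege) (S : stack) : Prop := checkl p (stop S :: srest S).
Definition privs (S : stack) : Pset := fun p => scheck p S.

Fixpoint den (D : ctx) (e : exp) (t : ty) (der : has_type D e t) {struct der}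
  : Principal -> Pset -> env Pset D -> lift (raw Pset t) :=
  match der in has_type D e t
        return Principal -> Pset -> env Pset D -> lift (raw Pset t) with
  | @T_True _ => fun n P h => Val true
  | @T_Var D x t0 H => fun n P h => Val (eq_rect (D x) (envty Pset) (h x) (Some t0) H)
  | @T_If _ _ _ _ _ d0 d1 d2 => fun n P h =>
      bind (den d0 n P h) (fun b : bool => if b then den d1 n P h else den d2 n P h)
  | @T_Lam _ x _ t1 t2 d0 => fun n P h =>
      Val (fun P' dd => den d0 n P' (extend h x t1 dd))
  | @T_App _ _ _ t1 t2 d1 d2 => fun n P h =>
      bind (den d1 n P h) (fun fv => bind (den d2 n P h) (fun a => fv P a))
  | @T_Letrec _ f x _ _ t1 t2 _ d1 d2 => fun n P h =>
      den d2 n P (extend h f (TArr t1 t2)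
        (fixp Pset (TArr t1 t2)
          (fun g => fun P' dd => den d1 n P' (extend (extend h f (TArr t1 t2) g) x t1 dd))))
  | @T_Signs _ n' _ _ d0 => fun n P h => den d0 n' (fun q => P q /\ ACL n' q) h
  | @T_Dopriv _ p _ _ d0 => fun n P h => den d0 n (fun q => P q \/ (q = p /\ ACL n p)) h
  | @T_Check _ p _ _ d0 => fun n P h =>
      if excluded_middle_informative (P p) then den d0 n P h else Star
  | @T_Test _ p _ _ _ d1 d2 => fun n P h =>
      if excluded_middle_informative (P p) then den d1 n P h else den d2 n P h
  end.

Fixpoint sden (D : ctx) (e : exp) (t : ty) (der : has_type D e t) {struct der}
  : stack -> env stack D -> lift (raw stack t) :=
  match der in has_type D e t
        return stack -> env stack D -> lift (raw stack t) with
  | @T_True _ => fun S h => Val true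
  | @T_Var D x t0 H => fun S h => Val (eq_rect (D x) (envty stack) (h x) (Some t0) H)
  | @T_If _ _ _ _ _ d0 d1 d2 => fun S h =>
      bind (sden d0 S h) (fun b : bool => if b then sden d1 S h else sden d2 S h)
  | @T_Lam _ x _ t1 t2 d0 => fun S h =>
      Val (fun S' dd => sden d0 S' (extend h x t1 dd))
  | @T_App _ _ _ t1 t2 d1 d2 => fun S h =>
      bind (sden d1 S h) (fun fv => bind (sden d2 S h) (fun a => fv S a))
  | @T_Letrec _ f x _ _ t1 t2 _ d1 d2 => fun S h =>
      sden d2 S (extend h f (TArr t1 t2)
        (fixp stack (TArr t1 t2)
          (fun g => fun S' dd => sden d1 S' (extend (extend h f (TArr t1 t2) g) x t1 dd))))
  | @T_Signs _ n' _ _ d0 => fun S h =>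
      sden d0 (MkStack (n', fun _ => False) (stop S :: srest S)) h
  | @T_Dopriv _ p _ _ d0 => fun S h =>
      let (n, P) := stop S in
      sden d0 (MkStack (n, fun q => P q \/ q = p) (srest S)) h
  | @T_Check _ p _ _ d0 => fun S h =>
      if excluded_middle_informative (scheck p S) then sden d0 S h else Star
  | @T_Test _ p _ _ _ d1 d2 => fun S h =>
      if excluded_middle_informative (scheck p S) then sden d1 S h else sden d2 S h
  end.

Definition simlift {A B} (R : A -> B -> Prop) (u : lift A) (u' : lift B) : Prop :=
  match u, u' with
  | Bot, Bot => True
  | Star, Star => True
  | Val a, Val b => R a b
  | _, _ => False
  end.

Fixpoint simv (t : ty) : raw Pset t -> raw stack t -> Prop :=
  match t return raw Pset t -> raw stack t -> Prop with
  | TBool => fun b b' => b = b'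
  | TArr t1 t2 => fun f f' =>
      forall (S : stack) (d : raw Pset t1) (d' : raw stack t1),
        elem Pset t1 d -> elem stack t1 d' ->
        simv t1 d d' -> simlift (simv t2) (f (privs S) d) (f' S d')
  end.

Definition sim (t : ty) := simlift (simv t).

Definition simenv (D : ctx) (h : env Pset D) (h' : env stack D) : Prop :=
  forall x, match D x as o return envty Pset o -> envty stack o -> Prop with
            | Some t => simv t
            | None => fun _ _ => True
            end (h x) (h' x).

End Language.

(* Main.v *)
Require Import Defs.
From Stdlib Require Import ClassicalEpsilon List Arith Lia FunctionalExtensionality PropExtensionality Classical.

Section Gen.
Variables (A : Type) (E : A -> Prop) (R : A -> A -> Prop).
Hypothesis Rrefl : forall a, R a a.
Hypothesis Rtrans : forall a b c, R a b -> R b c -> R a c.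

Definition chain (c : nat -> A) := forall k, R (c k) (c (S k)).

Lemma chain_le c : chain c -> forall k k', k <= k' -> R (c k) (c k').
Proof. intros Hc k k' H; induction H; eauto. Qed.

Lemma lub_equiv c l l' : is_lub E R c l -> E l' -> R l l' -> R l' l -> is_lub E R c l'.
Proof.
  intros [H1 [H2 H3]] E' L1 L2; split; [|split]; auto.
  - intros k; eauto.
  - intros u Eu Hu; eauto.
Qed.

Lemma lub_ext c c' l : (forall k, R (c k) (c' k)) -> (forall k, R (c' k) (c k)) ->
  is_lub E R c l -> is_lub E R c' l.
Proof.
  intros H1 H2 [L1 [L2 L3]]; split; [|split]; auto.
  - intros k; eauto.
  - intros u Eu Hu; apply L3; auto; intros k; eauto.
Qed.

Lemma lub_mono c c' l l' : (forall k, R (c k) (c' k)) ->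
  is_lub E R c l -> is_lub E R c' l' -> R l l'.
Proof.
  intros H [L1 [L2 L3]] [M1 [M2 M3]]; apply L3; auto; intros k; eauto.
Qed.

Lemma lub_unique c l l' : is_lub E R c l -> is_lub E R c l' -> R l l'.
Proof. intros; eapply lub_mono; eauto. Qed.

Lemma lub_shift c l N : chain c -> is_lub E R c l -> is_lub E R (fun j => c (N + j)) l.
Proof.
  intros Hc [L1 [L2 L3]]; split; [|split]; auto.
  intros u Eu Hu; apply L3; auto; intros k.
  apply Rtrans with (c (N + k)); auto. apply chain_le; auto; lia.
Qed.

Lemma lub_unshift c l N : chain c -> is_lub E R (fun j => c (N + j)) l -> is_lub E R c l.
Proof.
  intros Hc [L1 [L2 L3]]; split; [|split]; auto.
  - intros k; apply Rtrans with (c (N + k)); auto. apply chain_le; auto; lia.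
Qed.

Lemma lub_const a : E a -> is_lub E R (fun _ => a) a.
Proof. intros; split; [|split]; auto. intros u _ Hu; exact (Hu 0). Qed.

Lemma lub_ub c l k : is_lub E R c l -> R (c k) l.
Proof. intros [_ [H _]]; auto. Qed.
Lemma lub_E c l : is_lub E R c l -> E l.
Proof. intros [H _]; auto. Qed.

Section Diag.
Variable a : nat -> nat -> A.
Hypothesis Ha1 : forall i j, R (a i j) (a (S i) j).
Hypothesis Ha2 : forall i j, R (a i j) (a i (S j)).

Lemma dchain_le i j i' j' : i <= i' -> j <= j' -> R (a i j) (a i' j').
Proof.
  intros H1 H2. apply Rtrans with (a i' j).
  - induction H1; eauto.
  - induction H2; eauto.
Qed.

Lemma diag_lub L M : (forall i, is_lub E R (a i) (L i)) -> is_lub E R L M ->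
  is_lub E R (fun k => a k k) M.
Proof.
  intros HL [M1 [M2 M3]]; split; [|split]; auto.
  - intros k. apply Rtrans with (L k); auto. apply lub_ub; auto.
  - intros u Eu Hu. apply M3; auto. intros i.
    destruct (HL i) as [_ [_ H3]]. apply H3; auto. intros j.
    apply Rtrans with (a (max i j) (max i j)); auto. apply dchain_le; lia.
Qed.
End Diag.

Lemma diag_swap (a : nat -> nat -> A) L L' M' :
  (forall i j, R (a i j) (a (S i) j)) -> (forall i j, R (a i j) (a i (S j))) ->
  (forall i, is_lub E R (a i) (L i)) -> (exists M, is_lub E R L M) ->
  (forall j, is_lub E R (fun i => a i j) (L' j)) -> is_lub E R L' M' ->
  is_lub E R L M'.
Proof.
  intros H1 H2 HL [M HM] HL' HM'.
  assert (D1 : is_lub E R (fun k => a k k) M) by (eapply diag_lub; eauto).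
  assert (D2 : is_lub E R (fun k => (fun i j => a j i) k k) M').
  { apply (diag_lub (fun i j => a j i)) with (L := L'); auto. }
  simpl in D2.
  apply lub_equiv with M; auto. eapply lub_E; eauto.
  eapply lub_unique; eauto. eapply lub_unique; eauto.
Qed.

End Gen.
Arguments chain {A} R c.

Section Lift.
Variables (A : Type) (E : A -> Prop) (R : A -> A -> Prop).
Hypothesis Rrefl : forall a, R a a.
Hypothesis Rtrans : forall a b c, R a b -> R b c -> R a c.

Definition LE := liftelem E.
Definition LR := liftle R.

Lemma LRrefl u : LR u u.
Proof. destruct u; simpl; auto. Qed.
Lemma LRtrans u v w : LR u v -> LR v w -> LR u w.
Proof. destruct u, v, w; simpl; try tauto; eauto. Qed.

Lemma lchain_star (u : nat -> lift A) K : (forall k, LR (u k) (u (S k))) -> u K = Star ->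
  forall j, u (K + j) = Star.
Proof.
  intros Hc HK j; induction j. rewrite Nat.add_0_r; auto.
  specialize (Hc (K + j)). rewrite IHj in Hc. rewrite Nat.add_succ_r.
  destruct (u (S (K + j))); simpl in Hc; tauto.
Qed.

Lemma lchain_val (u : nat -> lift A) K a : (forall k, LR (u k) (u (S k))) -> u K = Val a ->
  forall j, exists b, u (K + j) = Val b.
Proof.
  intros Hc HK j; induction j. rewrite Nat.add_0_r; eauto.
  destruct IHj as [b Hb].
  specialize (Hc (K + j)). rewrite Hb in Hc. rewrite Nat.add_succ_r.
  destruct (u (S (K + j))); simpl in Hc; try tauto; eauto.
Qed.

Lemma llub_bot u : is_lub LE LR u Bot -> forall k, u k = Bot.
Proof.
  intros H k; pose proof (lub_ub _ _ _ _ _ k H) as Hk.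
  destruct (u k); simpl in *; tauto.
Qed.

Lemma llub_star_of u l K : u K = Star -> is_lub LE LR u l -> l = Star.
Proof.
  intros HK H; pose proof (lub_ub _ _ _ _ _ K H) as Hk. rewrite HK in Hk.
  destruct l; simpl in *; tauto.
Qed.

Lemma llub_val_of u l K a : u K = Val a -> is_lub LE LR u l -> exists f, l = Val f.
Proof.
  intros HK H; pose proof (lub_ub _ _ _ _ _ K H) as Hk. rewrite HK in Hk.
  destruct l; simpl in *; try tauto; eauto.
Qed.

Lemma llub_star u : is_lub LE LR u Star -> exists K, u K = Star.
Proof.
  intros H. destruct (classic (exists K, u K = Star)) as [?|Hn]; auto.
  exfalso.
  destruct (classic (exists K a, u K = Val a)) as [[K [a Ha]]|Hn2].
  - destruct (llub_val_of _ _ _ _ Ha H) as [f Hf]; discriminate.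
  - destruct H as [_ [_ H3]].
    assert (LR Star Bot); [|simpl in *; auto].
    apply H3; simpl; auto. intros k. destruct (u k) eqn:E0; simpl; auto.
    apply Hn; eauto. apply Hn2; eauto.
Qed.

Lemma llub_val u f : is_lub LE LR u (Val f) -> exists K a, u K = Val a.
Proof.
  intros H. destruct (classic (exists K a, u K = Val a)) as [?|Hn]; auto.
  exfalso.
  destruct (classic (exists K, u K = Star)) as [[K HK]|Hn2].
  - pose proof (llub_star_of _ _ _ HK H); discriminate.
  - destruct H as [_ [_ H3]].
    assert (LR (Val f) Bot); [|simpl in *; auto].
    apply H3; simpl; auto. intros k. destruct (u k) eqn:E0; simpl; auto.
    apply Hn2; eauto. apply Hn; eauto.
Qed.

Definition getv (a : A) (u : lift A) : A := match u with Val b => b | _ => a end.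

Lemma llub_vals u f K a : (forall k, LR (u k) (u (S k))) -> (forall k, LE (u k)) ->
  is_lub LE LR u (Val f) -> u K = Val a ->
  (forall j, u (K + j) = Val (getv a (u (K + j)))) /\
  (forall j, E (getv a (u (K + j)))) /\ chain R (fun j => getv a (u (K + j))) /\
  is_lub E R (fun j => getv a (u (K + j))) f.
Proof.
  intros Hc He H HK.
  assert (Hv : forall j, u (K + j) = Val (getv a (u (K + j)))).
  { intros j; destruct (lchain_val _ _ _ Hc HK j) as [b Hb]; rewrite Hb; auto. }
  split; [auto|split;[|split]].
  - intros j; specialize (He (K + j)); rewrite Hv in He; exact He.
  - intros j; pose proof (Hc (K + j)) as H'; rewrite <- Nat.add_succ_r in H'.
    destruct (lchain_val u K a Hc HK j) as [b1 E1].
    destruct (lchain_val u K a Hc HK (S j)) as [b2 E2].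
    rewrite E1, E2 in H'; rewrite E1, E2; exact H'.
  - destruct H as [H1 [H2 H3]]; split; [|split]; auto.
    + intros j; specialize (H2 (K + j)); rewrite Hv in H2; exact H2.
    + intros w Ew Hw.
      assert (LR (Val f) (Val w)); [|auto].
      apply H3; simpl; auto. intros k.
      apply LRtrans with (u (K + k)). apply (chain_le (lift A) LR LRrefl LRtrans); auto. lia. rewrite Hv; apply Hw.
Qed.

Definition lubl (lv : (nat -> A) -> A) (c : nat -> lift A) : lift A :=
  match excluded_middle_informative (exists k, c k <> Bot) with
  | left H => let k := proj1_sig (constructive_indefinite_description _ H) in
     match c k with Bot => Bot | Star => Star | Val a => Val (lv (fun j => getv a (c (k + j)))) end
  | right _ => Bot
  end.

Lemma lubl_ok (lv : (nat -> A) -> A) :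
  (forall c, (forall k, E (c k)) -> chain R c -> is_lub E R c (lv c)) ->
  forall c, (forall k, LE (c k)) -> (forall k, LR (c k) (c (S k))) -> is_lub LE LR c (lubl lv c).
Proof.
  intros Hlv c He Hc. unfold lubl.
  destruct (excluded_middle_informative _) as [H|H].
  - destruct (constructive_indefinite_description _ H) as [K HK]; simpl.
    destruct (c K) eqn:EK; [tauto| |].
    + apply (lub_unshift _ LE LR LRrefl LRtrans c Star K); auto.
      apply (lub_ext _ LE LR LRrefl LRtrans (fun _ => Star)).
      intros j; rewrite (lchain_star c K Hc EK j); simpl; auto.
      intros j; rewrite (lchain_star c K Hc EK j); simpl; auto.
      apply (lub_const _ LE LR LRrefl); simpl; auto.
    + set (ac := fun j => getv a (c (K + j))).
      assert (Hv : forall j, c (K + j) = Val (ac j)).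
      { intros j; unfold ac; destruct (lchain_val _ _ _ Hc EK j) as [b Hb]; rewrite Hb; auto. }
      assert (Hae : forall j, E (ac j)).
      { intros j; specialize (He (K + j)); rewrite Hv in He; exact He. }
      assert (Hac : chain R ac).
      { intros j; pose proof (Hc (K + j)) as H'; rewrite <- Nat.add_succ_r in H'.
        unfold ac.
        destruct (lchain_val c K a Hc EK j) as [b1 E1].
        destruct (lchain_val c K a Hc EK (S j)) as [b2 E2].
        rewrite E1, E2 in H'; rewrite E1, E2; exact H'. }
      destruct (Hlv ac Hae Hac) as [L1 [L2 L3]].
      apply (lub_unshift _ LE LR LRrefl LRtrans c _ K); auto.
      split; [|split]; simpl; auto.
      * intros j; rewrite Hv; simpl; auto.
      * intros u Eu Hu. destruct u; try (specialize (Hu 0); rewrite Hv in Hu; simpl in Hu; tauto).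
        simpl. apply L3; auto. intros j; specialize (Hu j); rewrite Hv in Hu; exact Hu.
  - assert (Hb : forall k, c k = Bot).
    { intros k; destruct (c k) eqn:E0; auto; exfalso; apply H; exists k; rewrite E0; discriminate. }
    split; [|split]; simpl; auto.
    intros k; rewrite Hb; simpl; auto.
Qed.

End Lift.
Arguments LE {A} E u. Arguments LR {A} R u v. Arguments getv {A} a u. Arguments lubl {A} lv c.

Lemma bind_lub {A B} (E : A -> Prop) (R : A -> A -> Prop) (E' : B -> Prop) (R' : B -> B -> Prop)
  (Rrefl : forall a, R a a) (Rtrans : forall a b c, R a b -> R b c -> R a c)
  (R'refl : forall a, R' a a) (R'trans : forall a b c, R' a b -> R' b c -> R' a c)
  (u : nat -> lift A) ul (K : nat -> A -> lift B) (Kl : A -> lift B) :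
  (forall k, LE E (u k)) -> (forall k, LR R (u k) (u (S k))) -> is_lub (LE E) (LR R) u ul ->
  (forall k a, E a -> LE E' (K k a)) ->
  (forall k a a', E a -> E a' -> R a a' -> LR R' (K k a) (K (S k) a')) ->
  (forall N (ac : nat -> A) al, (forall j, E (ac j)) -> chain R ac -> is_lub E R ac al ->
      is_lub (LE E') (LR R') (fun j => K (N + j) (ac j)) (Kl al)) ->
  is_lub (LE E') (LR R') (fun k => bind (u k) (K k)) (bind ul Kl).
Proof.
  intros He Hc Hl H0 H1 H2.
  assert (Hrc : chain (LR R') (fun k => bind (u k) (K k))).
  { intros k; pose proof (Hc k) as Hck; pose proof (He k) as Hek; pose proof (He (S k)) as He'.
    destruct (u k), (u (S k)); simpl in *; try tauto; auto. }
  destruct ul as [| |f].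
  - pose proof (llub_bot _ _ _ _ Hl) as Hb.
    apply (lub_ext _ (LE E') (LR R') (LRrefl _ _ R'refl) (LRtrans _ E' _ R'trans) (fun _ => Bot)).
    intros k; rewrite Hb; simpl; auto. intros k; rewrite Hb; simpl; auto.
    apply (lub_const _ (LE E') (LR R') (LRrefl _ _ R'refl)); simpl; auto.
  - destruct (llub_star _ _ _ _ Hl) as [K0 HK].
    apply (lub_unshift _ (LE E') (LR R') (LRrefl _ _ R'refl) (LRtrans _ E' _ R'trans) _ _ K0); auto.
    apply (lub_ext _ (LE E') (LR R') (LRrefl _ _ R'refl) (LRtrans _ E' _ R'trans) (fun _ => Star)).
    intros j; rewrite (lchain_star _ E R _ _ Hc HK j); simpl; auto.
    intros j; rewrite (lchain_star _ E R _ _ Hc HK j); simpl; auto.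
    apply (lub_const _ (LE E') (LR R') (LRrefl _ _ R'refl)); simpl; auto.
  - destruct (llub_val _ _ _ _ _ Hl) as [K0 [a HK]].
    destruct (llub_vals _ _ _ Rrefl Rtrans _ _ _ _ Hc He Hl HK) as [Hv [Hae [Hac Hal]]].
    apply (lub_unshift _ (LE E') (LR R') (LRrefl _ _ R'refl) (LRtrans _ E' _ R'trans) _ _ K0); auto.
    simpl. refine (lub_ext _ (LE E') (LR R') (LRrefl _ _ R'refl) (LRtrans _ E' _ R'trans) _ _ _ _ _ (H2 K0 _ _ Hae Hac Hal));
    intros j; simpl; rewrite (Hv j); simpl; apply LRrefl; auto.
Qed.

Section Dom.
Variable X : Type.
Notation raw := (raw X).
Notation le := (le X).
Notation elem := (elem X).

Lemma le_refl t : forall a : raw t, le t a a.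
Proof.
  induction t; simpl; auto. intros f P d _. destruct (f P d); simpl; auto.
Qed.

Lemma le_trans t : forall a b c : raw t, le t a b -> le t b c -> le t a c.
Proof.
  induction t; simpl. intros; congruence.
  intros f g k H1 H2 P d Hd. specialize (H1 P d Hd); specialize (H2 P d Hd).
  destruct (f P d), (g P d), (k P d); simpl in *; try tauto; eauto.
Qed.

Definition LEt t := LE (elem t).
Definition LRt t := LR (le t).
Lemma LRt_refl t u : LRt t u u. Proof. apply LRrefl, le_refl. Qed.
Lemma LRt_trans t u v w : LRt t u v -> LRt t v w -> LRt t u w.
Proof. apply (LRtrans _ (elem t)), le_trans. Qed.

Fixpoint lubv (t : ty) : (nat -> raw t) -> raw t :=
  match t return (nat -> raw t) -> raw t with
  | TBool => fun c => c 0
  | TArr t1 t2 => fun c P d => lubl (lubv t2) (fun k => c k P d)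
  end.

Lemma lubv_ok t : forall c, (forall k, elem t (c k)) -> chain (le t) c -> is_lub (elem t) (le t) c (lubv t c).
Proof.
  induction t as [|t1 IH1 t2 IH2].
  - intros c _ Hch; simpl in *.
    assert (Hc0 : forall k, c k = c 0) by (induction k; auto; rewrite <- IHk; symmetry; apply Hch).
    split; [exact I|split].
    + intros k; simpl; rewrite Hc0; reflexivity.
    + intros u _ Hu; simpl in *; rewrite <- (Hu 0); auto.
  - intros c Hc Hch.
    set (m := lubv (TArr t1 t2) c).
    assert (Hm : forall P d, elem t1 d -> is_lub (LEt t2) (LRt t2) (fun k => c k P d) (m P d)).
    { intros P d Hd. apply (lubl_ok _ (elem t2) (le t2) (le_refl t2) (le_trans t2) (lubv t2) IH2).
      intros k; exact (proj1 (Hc k P) d Hd). intros k; exact (Hch k P d Hd). }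
    assert (Hmono : forall P d d', elem t1 d -> elem t1 d' -> le t1 d d' -> LRt t2 (m P d) (m P d')).
    { intros P d d' Hd Hd' Hle.
      apply (lub_mono _ (LEt t2) (LRt t2) (LRt_refl t2) (LRt_trans t2) (fun k => c k P d) (fun k => c k P d')); auto.
      intros k; exact (proj1 (proj2 (Hc k P)) d d' Hd Hd' Hle). }
    assert (Hme : elem (TArr t1 t2) m).
    { intros P; split; [|split].
      - intros d Hd; exact (lub_E _ _ _ _ _ (Hm P d Hd)).
      - exact (Hmono P).
      - intros dc dl Hdc Hdch Hdl.
        assert (Hdle : elem t1 dl) by exact (lub_E _ _ _ _ _ Hdl).
        apply (diag_swap _ (LEt t2) (LRt t2) (LRt_refl t2) (LRt_trans t2)
                 (fun j i => c i P (dc j)) (fun j => m P (dc j)) (fun i => c i P dl)).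
        + intros j i; exact (proj1 (proj2 (Hc i P)) _ _ (Hdc j) (Hdc (S j)) (Hdch j)).
        + intros j i; exact (Hch i P (dc j) (Hdc j)).
        + intros j; apply Hm; auto.
        + eexists. apply (lubl_ok _ (elem t2) (le t2) (le_refl t2) (le_trans t2) (lubv t2) IH2).
          intros j; exact (lub_E _ _ _ _ _ (Hm P (dc j) (Hdc j))).
          intros j; exact (Hmono P _ _ (Hdc j) (Hdc (S j)) (Hdch j)).
        + intros i; exact (proj2 (proj2 (Hc i P)) dc dl Hdc Hdch Hdl).
        + apply Hm; auto. }
    split; [|split]; auto.
    + intros k P d Hd. exact (lub_ub _ _ _ _ _ k (Hm P d Hd)).
    + intros u Eu Hu P d Hd. destruct (Hm P d Hd) as [_ [_ H3]].
      apply H3. exact (proj1 (Eu P) d Hd). intros k; exact (Hu k P d Hd).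
Qed.

Lemma lub_exists t c : (forall k, elem t (c k)) -> chain (le t) c -> exists l, is_lub (elem t) (le t) c l.
Proof. intros; eexists; apply lubv_ok; auto. Qed.

Lemma arrow_pointwise t1 t2 (c : nat -> raw (TArr t1 t2)) l :
  (forall k, elem _ (c k)) -> chain (le _) c -> is_lub (elem _) (le _) c l ->
  forall P d, elem t1 d -> is_lub (LEt t2) (LRt t2) (fun k => c k P d) (l P d).
Proof.
  intros Hc Hch Hl P d Hd.
  pose proof (lubv_ok _ c Hc Hch) as Hm.
  assert (H1 : le _ l (lubv _ c)) by exact (lub_unique _ _ _ (le_refl _) (le_trans _) _ _ _ Hl Hm).
  assert (H2 : le _ (lubv _ c) l) by exact (lub_unique _ _ _ (le_refl _) (le_trans _) _ _ _ Hm Hl).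
  apply (lub_equiv _ _ _ (LRt_refl t2) (LRt_trans t2) _ (lubv (TArr t1 t2) c P d)).
  - apply (lubl_ok _ (elem t2) (le t2) (le_refl t2) (le_trans t2) (lubv t2)).
    intros; apply lubv_ok; auto. intros k; exact (proj1 (Hc k P) d Hd). intros k; exact (Hch k P d Hd).
  - exact (proj1 (proj1 Hl P) d Hd).
  - exact (H2 P d Hd).
  - exact (H1 P d Hd).
Qed.

Lemma arrow_assemble t1 t2 (c : nat -> raw (TArr t1 t2)) (l : raw (TArr t1 t2)) :
  elem _ l -> (forall P d, elem t1 d -> is_lub (LEt t2) (LRt t2) (fun k => c k P d) (l P d)) ->
  is_lub (elem _) (le _) c l.
Proof.
  intros El H. split; [|split]; auto.
  - intros k P d Hd; exact (lub_ub _ _ _ _ _ k (H P d Hd)).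
  - intros u Eu Hu P d Hd. destruct (H P d Hd) as [_ [_ H3]].
    apply H3. exact (proj1 (Eu P) d Hd). intros k; exact (Hu k P d Hd).
Qed.

Definition botf t1 t2 : raw (TArr t1 t2) := fun _ _ => Bot.

Lemma botf_elem t1 t2 : elem _ (botf t1 t2).
Proof.
  intros P; split; [|split]; simpl; auto.
  intros c l _ _ _. apply (lub_const _ (LEt t2) (LRt t2) (LRt_refl t2)); simpl; exact I.
Qed.

Definition goodG t (G : raw t -> raw t) :=
  (forall g, elem t g -> elem t (G g)) /\
  (forall g g', elem t g -> elem t g' -> le t g g' -> le t (G g) (G g')) /\
  (forall c l, (forall k, elem t (c k)) -> chain (le t) c -> is_lub (elem t) (le t) c l ->
     is_lub (elem t) (le t) (fun k => G (c k)) (G l)).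

Definition kl t1 t2 (G : raw (TArr t1 t2) -> raw (TArr t1 t2)) (i : nat) := Nat.iter i G (botf t1 t2).

Lemma kl_elem t1 t2 G : goodG _ G -> forall i, elem _ (kl t1 t2 G i).
Proof. intros [H1 _] i; induction i; simpl. apply botf_elem. apply H1; exact IHi. Qed.

Lemma kl_chain t1 t2 G : goodG _ G -> chain (le _) (kl t1 t2 G).
Proof.
  intros HG i; induction i.
  - intros P d _; simpl; exact I.
  - exact (proj1 (proj2 HG) _ _ (kl_elem t1 t2 G HG i) (kl_elem t1 t2 G HG (S i)) IHi).
Qed.

Lemma fix_ok t1 t2 G : goodG (TArr t1 t2) G ->
  is_lfp X _ G (fixp X _ G) /\ is_lub (elem _) (le _) (kl t1 t2 G) (fixp X _ G).
Proof.
  intros HG. destruct HG as [G1 [G2 G3]] eqn:EG.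
  set (gl := lubv _ (kl t1 t2 G)).
  assert (Hgl : is_lub (elem _) (le _) (kl t1 t2 G) gl) by (apply lubv_ok; [apply kl_elem|apply kl_chain]; auto).
  assert (Egl : elem _ gl) by exact (lub_E _ _ _ _ _ Hgl).
  assert (HGgl : is_lub (elem _) (le _) (fun k => kl t1 t2 G (1 + k)) (G gl)).
  { apply G3; auto. apply kl_elem; auto. apply kl_chain; auto. }
  assert (Hgl1 : is_lub (elem _) (le _) (fun k => kl t1 t2 G (1 + k)) gl).
  { apply lub_shift; auto. apply le_refl. apply le_trans. apply kl_chain; auto. }
  assert (Hlow : forall g', elem _ g' -> le _ (G g') g' -> forall i, le _ (kl t1 t2 G i) g').
  { intros g' Eg' Hg' i; induction i. intros P d _; simpl; exact I.
    simpl. apply le_trans with (G g'); auto. apply G2; auto. apply kl_elem; auto. }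
  assert (Hlfp : is_lfp X _ G gl).
  { split; [auto|split;[|split]].
    - exact (lub_unique _ _ _ (le_refl _) (le_trans _) _ _ _ HGgl Hgl1).
    - exact (lub_unique _ _ _ (le_refl _) (le_trans _) _ _ _ Hgl1 HGgl).
    - intros g' Eg' H1 _. destruct Hgl as [_ [_ H3]]. apply H3; auto. }
  assert (Hf : is_lfp X _ G (fixp X _ G)).
  { unfold fixp. apply epsilon_spec. exists gl; auto. }
  split; auto.
  destruct Hf as [F1 [F2 [F3 F4]]].
  apply (lub_equiv _ _ _ (le_refl _) (le_trans _) _ gl (fixp X _ G) Hgl F1).
  - destruct Hgl as [_ [_ H3]]. exact (H3 _ F1 (fun k => Hlow _ F1 F2 k)).
  - exact (F4 gl Egl (proj1 (proj2 Hlfp)) (proj1 (proj2 (proj2 Hlfp)))).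
Qed.


Lemma bind_elemT t t' (u : lift (raw t)) (K : raw t -> lift (raw t')) :
  LEt t u -> (forall a, elem t a -> LEt t' (K a)) -> LEt t' (bind u K).
Proof. destruct u; simpl; auto. Qed.

Lemma bind_monoT t t' (u v : lift (raw t)) (K K' : raw t -> lift (raw t')) :
  LEt t u -> LEt t v -> LRt t u v ->
  (forall a a', elem t a -> elem t a' -> le t a a' -> LRt t' (K a) (K' a')) ->
  LRt t' (bind u K) (bind v K').
Proof. destruct u, v; simpl; try tauto; auto. Qed.

Lemma const_lubT t (u : lift (raw t)) : LEt t u -> is_lub (LEt t) (LRt t) (fun _ => u) u.
Proof. intros; apply lub_const; auto. apply LRt_refl. Qed.

Lemma val_lubT t c l : is_lub (elem t) (le t) c l -> is_lub (LEt t) (LRt t) (fun k => Val (c k)) (Val l).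
Proof.
  intros [H1 [H2 H3]]; split; [exact H1|split].
  intros k; exact (H2 k).
  intros u Eu Hu. destruct u; try (specialize (Hu 0); simpl in Hu; tauto).
  simpl; apply H3; [exact Eu|]. intros k; exact (Hu k).
Qed.

Lemma bind_lubT t t' (u : nat -> lift (raw t)) ul (K : nat -> raw t -> lift (raw t')) Kl :
  (forall k, LEt t (u k)) -> (forall k, LRt t (u k) (u (S k))) -> is_lub (LEt t) (LRt t) u ul ->
  (forall k a, elem t a -> LEt t' (K k a)) ->
  (forall k a a', elem t a -> elem t a' -> le t a a' -> LRt t' (K k a) (K (S k) a')) ->
  (forall N (ac : nat -> raw t) al, (forall j, elem t (ac j)) -> chain (le t) ac -> is_lub (elem t) (le t) ac al ->
      is_lub (LEt t') (LRt t') (fun j => K (N + j) (ac j)) (Kl al)) ->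
  is_lub (LEt t') (LRt t') (fun k => bind (u k) (K k)) (bind ul Kl).
Proof.
  intros. apply (bind_lub (elem t) (le t) (elem t') (le t') (le_refl t) (le_trans t) (le_refl t') (le_trans t')); auto.
Qed.

Lemma lubT_shift t (c : nat -> lift (raw t)) l N : (forall k, LRt t (c k) (c (S k))) ->
  is_lub (LEt t) (LRt t) c l -> is_lub (LEt t) (LRt t) (fun j => c (N + j)) l.
Proof. intros; apply lub_shift; auto. apply LRt_refl. apply LRt_trans. Qed.

End Dom.

Section Env.
Variable X : Type.

Definition oelem (o : option ty) : envty X o -> Prop :=
  match o return envty X o -> Prop with Some t => elem X t | None => fun _ => True end.
Definition ole (o : option ty) : envty X o -> envty X o -> Prop :=
  match o return envty X o -> envty X o -> Prop with Some t => le X t | None => fun _ _ => True end.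
Definition olub (o : option ty) : (nat -> envty X o) -> envty X o -> Prop :=
  match o return (nat -> envty X o) -> envty X o -> Prop with
  | Some t => fun c l => is_lub (elem X t) (le X t) c l | None => fun _ _ => True end.

Definition envle {D} (h1 h2 : env X D) := forall x, ole (D x) (h1 x) (h2 x).
Definition envlub {D} (hc : nat -> env X D) (hl : env X D) := forall x, olub (D x) (fun k => hc k x) (hl x).

Lemma ole_refl o (v : envty X o) : ole o v v.
Proof. destruct o; simpl; auto. apply le_refl. Qed.
Lemma ole_trans o (a b c : envty X o) : ole o a b -> ole o b c -> ole o a c.
Proof. destruct o; simpl; auto. apply le_trans. Qed.
Lemma olub_le o (c : nat -> envty X o) l k : olub o c l -> ole o (c k) l.
Proof. destruct o; simpl; auto. intros H; exact (lub_ub _ _ _ _ _ k H). Qed.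
Lemma olub_elem o (c : nat -> envty X o) l : olub o c l -> oelem o l.
Proof. destruct o; simpl; auto. intros H; exact (lub_E _ _ _ _ _ H). Qed.
Lemma olub_const o (v : envty X o) : oelem o v -> olub o (fun _ => v) v.
Proof. destruct o; simpl; auto. intros; apply lub_const; auto. apply le_refl. Qed.
Lemma olub_shift o (c : nat -> envty X o) l N : (forall k, oelem o (c k)) -> (forall k, ole o (c k) (c (S k))) ->
  olub o c l -> olub o (fun j => c (N + j)) l.
Proof. destruct o; simpl; auto. intros; apply lub_shift; auto. apply le_refl. apply le_trans. Qed.

Lemma envle_refl {D} (h : env X D) : envle h h.
Proof. intros x; apply ole_refl. Qed.
Lemma envle_trans {D} (h1 h2 h3 : env X D) : envle h1 h2 -> envle h2 h3 -> envle h1 h3.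
Proof. intros H1 H2 x; eapply ole_trans; eauto. Qed.
Lemma envlub_le {D} (hc : nat -> env X D) hl k : envlub hc hl -> envle (hc k) hl.
Proof. intros H x; exact (olub_le _ _ _ k (H x)). Qed.
Lemma envlub_elem {D} (hc : nat -> env X D) hl : envlub hc hl -> envelem hl.
Proof. intros H x; exact (olub_elem _ _ _ (H x)). Qed.
Lemma envlub_const {D} (h : env X D) : envelem h -> envlub (fun _ => h) h.
Proof. intros H x; exact (olub_const _ _ (H x)). Qed.
Lemma envlub_shift {D} (hc : nat -> env X D) hl N :
  (forall k, envelem (hc k)) -> (forall k, envle (hc k) (hc (S k))) -> envlub hc hl ->
  envlub (fun j => hc (N + j)) hl.
Proof. intros He Hc H x. exact (olub_shift _ (fun k => hc k x) _ N (fun k => He k x) (fun k => Hc k x) (H x)). Qed.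

Lemma ext_elem {D} (h : env X D) x t d : envelem h -> elem X t d -> envelem (extend h x t d).
Proof.
  intros H Hd y. unfold extend, upd. destruct (Nat.eq_dec y x); [exact Hd|apply H].
Qed.

Lemma ext_le {D} (h1 h2 : env X D) x t d1 d2 : envle h1 h2 -> le X t d1 d2 ->
  envle (extend h1 x t d1) (extend h2 x t d2).
Proof.
  intros H Hd y. unfold extend, upd. destruct (Nat.eq_dec y x); simpl; [auto|apply H].
Qed.

Lemma ext_lub {D} (hc : nat -> env X D) hl x t dc dl : envlub hc hl ->
  is_lub (elem X t) (le X t) dc dl ->
  envlub (fun k => extend (hc k) x t (dc k)) (extend hl x t dl).
Proof.
  intros H Hd y. unfold extend, upd. destruct (Nat.eq_dec y x); simpl; [auto|apply H].
Qed.

Lemma var_gen t : forall o (v : envty X o) (H : o = Some t), oelem o v -> elem X t (eq_rect o (envty X) v (Some t) H).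
Proof. intros o v H; subst; simpl; auto. Qed.

Lemma var_le_gen t : forall o (v w : envty X o) (H : o = Some t), ole o v w ->
  le X t (eq_rect o (envty X) v (Some t) H) (eq_rect o (envty X) w (Some t) H).
Proof. intros o v w H; subst; simpl; auto. Qed.

Lemma var_lub_gen t : forall o (c : nat -> envty X o) l (H : o = Some t), olub o c l ->
  is_lub (elem X t) (le X t) (fun k => eq_rect o (envty X) (c k) (Some t) H) (eq_rect o (envty X) l (Some t) H).
Proof. intros o c l H; subst; simpl; auto. Qed.

End Env.

Lemma envchain_shift X D (hc : nat -> env X D) : (forall k, envle X (hc k) (hc (S k))) ->
  forall N j, envle X (hc (N + j)) (hc (N + S j)).
Proof. intros H N j; rewrite Nat.add_succ_r; apply H. Qed.

Lemma envchain_shiftE X D (hc : nat -> env X D) : (forall k, envelem (hc k)) ->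
  forall N j, envelem (hc (N + j)).
Proof. auto. Qed.

Section DenS.
Variables Principal Privilege : Type.
Variable ACL : Principal -> Pset Privilege.
Notation X := (Pset Privilege).

Definition DA D e t (der : has_type D e t) := forall n P (h : env X D), envelem h -> LEt X t (den ACL der n P h).
Definition DB D e t (der : has_type D e t) := forall n P (h1 h2 : env X D), envelem h1 -> envelem h2 -> envle X h1 h2 ->
  LRt X t (den ACL der n P h1) (den ACL der n P h2).
Definition DC D e t (der : has_type D e t) := forall n P (hc : nat -> env X D) hl, (forall k, envelem (hc k)) ->
  (forall k, envle X (hc k) (hc (S k))) -> envlub X hc hl ->
  is_lub (LEt X t) (LRt X t) (fun k => den ACL der n P (hc k)) (den ACL der n P hl).

Arguments DA {D e t} der. Arguments DB {D e t} der. Arguments DC {D e t} der.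

Theorem den_props D e t (der : has_type D e t) : DA der /\ DB der /\ DC der.
Proof.
  induction der.
  all: unfold DA, DB, DC in *.
  -
    split; [|split].
    + intros; exact I.
    + intros; apply LRt_refl.
    + intros; apply const_lubT; exact I.
  -
    split; [|split].
    + intros n P h Hh; exact (var_gen X t (D x) (h x) e (Hh x)).
    + intros n P h1 h2 _ _ H12; exact (var_le_gen X t (D x) (h1 x) (h2 x) e (H12 x)).
    + intros n P hc hl _ _ Hl.
      exact (val_lubT X t (fun k => eq_rect (D x) (envty X) (hc k x) (Some t) e) _
               (var_lub_gen X t (D x) (fun k => hc k x) (hl x) e (Hl x))).
  -
    destruct IHder1 as [A1 [B1 C1]], IHder2 as [A2 [B2 C2]], IHder3 as [A3 [B3 C3]].
    split; [|split].
    + intros n P h Hh; cbn [den]. apply bind_elemT. exact (A1 n P h Hh).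
      intros b _; destruct b; [exact (A2 n P h Hh)|exact (A3 n P h Hh)].
    + intros n P h1 h2 E1 E2 H12; cbn [den]. apply bind_monoT.
      exact (A1 n P h1 E1). exact (A1 n P h2 E2). exact (B1 n P h1 h2 E1 E2 H12).
      intros b b' _ _ Hbb; simpl in Hbb; subst b'; destruct b;
        [exact (B2 n P h1 h2 E1 E2 H12)|exact (B3 n P h1 h2 E1 E2 H12)].
    + intros n P hc hl He Hch Hl; cbn [den].
      apply (bind_lubT X TBool t (fun k => den ACL der1 n P (hc k)) _
        (fun k b => if b then den ACL der2 n P (hc k) else den ACL der3 n P (hc k))
        (fun b => if b then den ACL der2 n P hl else den ACL der3 n P hl)).
      * intros k; exact (A1 n P _ (He k)).
      * intros k; exact (B1 n P _ _ (He k) (He (S k)) (Hch k)).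
      * exact (C1 n P hc hl He Hch Hl).
      * intros k b _; destruct b; [exact (A2 n P _ (He k))|exact (A3 n P _ (He k))].
      * intros k b b' _ _ Hbb; simpl in Hbb; subst b'; destruct b;
          [exact (B2 n P _ _ (He k) (He (S k)) (Hch k))|exact (B3 n P _ _ (He k) (He (S k)) (Hch k))].
      * intros N ac al Hac Hch' Hal.
        assert (Hce : forall j, ac j = al) by (intros j; exact (lub_ub _ _ _ _ _ j Hal)).
        apply (lub_ext _ _ _ (LRt_refl X t) (LRt_trans X t)
                 (fun j => if al then den ACL der2 n P (hc (N + j)) else den ACL der3 n P (hc (N + j)))).
        intros j; rewrite Hce; apply LRt_refl.
        intros j; rewrite Hce; apply LRt_refl.
        destruct al.
        exact (C2 n P (fun j => hc (N + j)) hl (fun j => He (N + j)) (envchain_shift X D hc Hch N)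
                 (envlub_shift X hc hl N He Hch Hl)).
        exact (C3 n P (fun j => hc (N + j)) hl (fun j => He (N + j)) (envchain_shift X D hc Hch N)
                 (envlub_shift X hc hl N He Hch Hl)).
  -
    destruct IHder as [A0 [B0 C0]].
    assert (LA : forall n (h : env X D), envelem h -> elem X (TArr t1 t2) (fun P' dd => den ACL der n P' (extend h x t1 dd))).
    { intros n h Hh P'. split; [|split].
      - intros d Hd; exact (A0 n P' _ (ext_elem _ _ _ _ _ Hh Hd)).
      - intros d d' Hd Hd' Hle; exact (B0 n P' _ _ (ext_elem _ _ _ _ _ Hh Hd) (ext_elem _ _ _ _ _ Hh Hd')
                                         (ext_le _ _ _ _ _ _ _ (envle_refl _ h) Hle)).
      - intros c l Hc Hch Hl; exact (C0 n P' (fun k => extend h x t1 (c k)) _ (fun k => ext_elem _ _ _ _ _ Hh (Hc k))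
           (fun k => ext_le _ _ _ _ _ _ _ (envle_refl _ h) (Hch k)) (ext_lub _ _ _ _ _ _ _ (envlub_const _ h Hh) Hl)). }
    split; [|split].
    + intros n P h Hh; exact (LA n h Hh).
    + intros n P h1 h2 E1 E2 H12; cbn [den]. intros P' d Hd.
      exact (B0 n P' _ _ (ext_elem _ _ _ _ _ E1 Hd) (ext_elem _ _ _ _ _ E2 Hd) (ext_le _ _ _ _ _ _ _ H12 (le_refl X t1 d))).
    + intros n P hc hl He Hch Hl; cbn [den].
      apply (val_lubT X (TArr t1 t2) (fun k => fun P' dd => den ACL der n P' (extend (hc k) x t1 dd))).
      apply arrow_assemble. exact (LA n hl (envlub_elem _ _ _ Hl)).
      intros P' d Hd.
      exact (C0 n P' (fun k => extend (hc k) x t1 d) _ (fun k => ext_elem _ _ _ _ _ (He k) Hd)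
               (fun k => ext_le _ _ _ _ _ _ _ (Hch k) (le_refl X t1 d))
               (ext_lub _ _ _ _ _ _ _ Hl (lub_const _ _ _ (le_refl X t1) d Hd))).
  -
    destruct IHder1 as [A1 [B1 C1]], IHder2 as [A2 [B2 C2]].
    split; [|split].
    + intros n P h Hh; cbn [den]. apply bind_elemT. exact (A1 n P h Hh).
      intros fv Efv. apply bind_elemT. exact (A2 n P h Hh).
      intros a Ea; exact (proj1 (Efv P) a Ea).
    + intros n P h1 h2 E1 E2 H12; cbn [den]. apply bind_monoT.
      exact (A1 n P h1 E1). exact (A1 n P h2 E2). exact (B1 n P h1 h2 E1 E2 H12).
      intros fv fv' Efv Efv' Hff. apply bind_monoT.
      exact (A2 n P h1 E1). exact (A2 n P h2 E2). exact (B2 n P h1 h2 E1 E2 H12).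
      intros a a' Ea Ea' Haa. apply LRt_trans with (fv P a').
      exact (proj1 (proj2 (Efv P)) a a' Ea Ea' Haa). exact (Hff P a' Ea').
    + intros n P hc hl He Hch Hl; cbn [den].
      apply (bind_lubT X (TArr t1 t2) t2 (fun k => den ACL der1 n P (hc k)) _
        (fun k fv => bind (den ACL der2 n P (hc k)) (fun a => fv P a))
        (fun fv => bind (den ACL der2 n P hl) (fun a => fv P a))).
      * intros k; exact (A1 n P _ (He k)).
      * intros k; exact (B1 n P _ _ (He k) (He (S k)) (Hch k)).
      * exact (C1 n P hc hl He Hch Hl).
      * intros k fv Efv; apply bind_elemT. exact (A2 n P _ (He k)).
        intros a Ea; exact (proj1 (Efv P) a Ea).
      * intros k fv fv' Efv Efv' Hff. apply bind_monoT.
        exact (A2 n P _ (He k)). exact (A2 n P _ (He (S k))). exact (B2 n P _ _ (He k) (He (S k)) (Hch k)).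
        intros a a' Ea Ea' Haa. apply LRt_trans with (fv P a').
        exact (proj1 (proj2 (Efv P)) a a' Ea Ea' Haa). exact (Hff P a' Ea').
      * intros N fc fl Efc Hfch Hfl.
        apply (bind_lubT X t1 t2 (fun j => den ACL der2 n P (hc (N + j))) _ (fun j a => fc j P a) (fun a => fl P a)).
        -- intros j; exact (A2 n P _ (He (N + j))).
        -- intros j; exact (B2 n P _ _ (He (N + j)) (He (N + S j)) (envchain_shift X D hc Hch N j)).
        -- exact (C2 n P (fun j => hc (N + j)) hl (fun j => He (N + j)) (envchain_shift X D hc Hch N)
                 (envlub_shift X hc hl N He Hch Hl)).
        -- intros j a Ea; exact (proj1 (Efc j P) a Ea).
        -- intros j a a' Ea Ea' Haa. apply LRt_trans with (fc j P a').
           exact (proj1 (proj2 (Efc j P)) a a' Ea Ea' Haa). exact (Hfch j P a' Ea').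
        -- intros N' bc bl Ebc Hbch Hbl.
           assert (Ebl : elem X t1 bl) by exact (lub_E _ _ _ _ _ Hbl).
           refine (diag_lub _ (LEt X t2) (LRt X t2) (LRt_refl X t2) (LRt_trans X t2)
                    (fun k i => fc (N' + k) P (bc i)) _ _ (fun k => fc (N' + k) P bl) _ _ _).
           ++ intros k i; simpl. rewrite Nat.add_succ_r. exact (Hfch (N' + k) P (bc i) (Ebc i)).
           ++ intros k i; exact (proj1 (proj2 (Efc (N' + k) P)) _ _ (Ebc i) (Ebc (S i)) (Hbch i)).
           ++ intros k; exact (proj2 (proj2 (Efc (N' + k) P)) bc bl Ebc Hbch Hbl).
           ++ apply (lubT_shift X t2 (fun k => fc k P bl)). intros k; exact (Hfch k P bl Ebl).
              exact (arrow_pointwise X t1 t2 fc fl Efc Hfch Hfl P bl Ebl).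
  -
    destruct IHder1 as [HA [HB HC]], IHder2 as [IA [IB IC]].
    pose (GL := fun n (h : env X D) (g : raw X (TArr t1 t2)) =>
       (fun P' dd => den ACL der1 n P' (extend (extend h f (TArr t1 t2) g) x t1 dd)) : raw X (TArr t1 t2)).
    assert (ee : forall (h : env X D) g d, envelem h -> elem X _ g -> elem X t1 d ->
                 envelem (extend (extend h f (TArr t1 t2) g) x t1 d))
      by (intros; apply ext_elem; [apply ext_elem|]; auto).
    assert (Good : forall n h, envelem h -> goodG X _ (GL n h)).
    { intros n h Hh.
      assert (E1 : forall g, elem X _ g -> elem X _ (GL n h g)).
      { intros g Eg P'. split; [|split].
        - intros d Hd; exact (HA n P' _ (ee h g d Hh Eg Hd)).
        - intros d d' Hd Hd' Hle; exact (HB n P' _ _ (ee h g d Hh Eg Hd) (ee h g d' Hh Eg Hd')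
              (ext_le _ _ _ _ _ _ _ (envle_refl _ _) Hle)).
        - intros c l Hc Hch Hl. exact (HC n P' (fun k => extend (extend h f _ g) x t1 (c k)) _
              (fun k => ee h g (c k) Hh Eg (Hc k)) (fun k => ext_le _ _ _ _ _ _ _ (envle_refl _ _) (Hch k))
              (ext_lub _ _ _ _ _ _ _ (envlub_const _ _ (ext_elem _ _ _ _ _ Hh Eg)) Hl)). }
      split; [exact E1|split].
      - intros g g' Eg Eg' Hle P' d Hd. exact (HB n P' _ _ (ee h g d Hh Eg Hd) (ee h g' d Hh Eg' Hd)
          (ext_le _ _ _ _ _ _ _ (ext_le _ _ _ _ _ _ _ (envle_refl _ h) Hle) (le_refl X t1 d))).
      - intros c l Hc Hch Hl. apply arrow_assemble. apply E1; exact (lub_E _ _ _ _ _ Hl).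
        intros P' d Hd. exact (HC n P' (fun k => extend (extend h f _ (c k)) x t1 d) _
          (fun k => ee h (c k) d Hh (Hc k) Hd)
          (fun k => ext_le _ _ _ _ _ _ _ (ext_le _ _ _ _ _ _ _ (envle_refl _ h) (Hch k)) (le_refl X t1 d))
          (ext_lub _ _ _ _ _ _ _ (ext_lub _ _ _ _ _ _ _ (envlub_const _ h Hh) Hl) (lub_const _ _ _ (le_refl X t1) d Hd))). }
    assert (KM : forall n h1 h2, envelem h1 -> envelem h2 -> envle X h1 h2 ->
               forall i, le X _ (kl X t1 t2 (GL n h1) i) (kl X t1 t2 (GL n h2) i)).
    { intros n h1 h2 E1 E2 H12 i; induction i.
      - apply le_refl.
      - intros P' d Hd.
        exact (HB n P' _ _ (ee h1 _ d E1 (kl_elem X t1 t2 _ (Good n h1 E1) i) Hd)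
                 (ee h2 _ d E2 (kl_elem X t1 t2 _ (Good n h2 E2) i) Hd)
                 (ext_le _ _ _ _ _ _ _ (ext_le _ _ _ _ _ _ _ H12 IHi) (le_refl X t1 d))). }
    assert (FM : forall n h1 h2, envelem h1 -> envelem h2 -> envle X h1 h2 ->
               le X _ (fixp X _ (GL n h1)) (fixp X _ (GL n h2))).
    { intros n h1 h2 E1 E2 H12.
      exact (lub_mono _ _ _ (le_refl X _) (le_trans X _) _ _ _ _ (KM n h1 h2 E1 E2 H12)
               (proj2 (fix_ok X t1 t2 _ (Good n h1 E1))) (proj2 (fix_ok X t1 t2 _ (Good n h2 E2)))). }
    assert (FE : forall n h, envelem h -> elem X _ (fixp X _ (GL n h)))
      by (intros n h Hh; exact (proj1 (proj1 (fix_ok X t1 t2 _ (Good n h Hh))))).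
    split; [|split].
    + intros n P h Hh.
      change (LEt X t (den ACL der2 n P (extend h f (TArr t1 t2) (fixp X _ (GL n h))))).
      exact (IA n P _ (ext_elem _ _ _ _ _ Hh (FE n h Hh))).
    + intros n P h1 h2 E1 E2 H12.
      change (LRt X t (den ACL der2 n P (extend h1 f (TArr t1 t2) (fixp X _ (GL n h1))))
                      (den ACL der2 n P (extend h2 f (TArr t1 t2) (fixp X _ (GL n h2))))).
      exact (IB n P _ _ (ext_elem _ _ _ _ _ E1 (FE n h1 E1)) (ext_elem _ _ _ _ _ E2 (FE n h2 E2))
               (ext_le _ _ _ _ _ _ _ H12 (FM n h1 h2 E1 E2 H12))).
    + intros n P hc hl He Hch Hl.
      assert (Ehl := envlub_elem _ _ _ Hl).
      assert (KL : forall i, is_lub (elem X _) (le X _) (fun k => kl X t1 t2 (GL n (hc k)) i) (kl X t1 t2 (GL n hl) i)).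
      { induction i.
        - exact (lub_const _ _ _ (le_refl X _) _ (botf_elem X t1 t2)).
        - apply arrow_assemble. exact (kl_elem X t1 t2 _ (Good n hl Ehl) (S i)).
          intros P' d Hd.
          exact (HC n P' (fun k => extend (extend (hc k) f _ (kl X t1 t2 (GL n (hc k)) i)) x t1 d) _
            (fun k => ee (hc k) _ d (He k) (kl_elem X t1 t2 _ (Good n (hc k) (He k)) i) Hd)
            (fun k => ext_le _ _ _ _ _ _ _ (ext_le _ _ _ _ _ _ _ (Hch k) (KM n _ _ (He k) (He (S k)) (Hch k) i)) (le_refl X t1 d))
            (ext_lub _ _ _ _ _ _ _ (ext_lub _ _ _ _ _ _ _ Hl IHi) (lub_const _ _ _ (le_refl X t1) d Hd))). }
      assert (FL : is_lub (elem X _) (le X _) (fun k => fixp X _ (GL n (hc k))) (fixp X _ (GL n hl))).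
      { refine (diag_swap _ _ _ (le_refl X _) (le_trans X _) (fun k i => kl X t1 t2 (GL n (hc k)) i)
                  (fun k => fixp X _ (GL n (hc k))) (fun i => kl X t1 t2 (GL n hl) i) (fixp X _ (GL n hl)) _ _ _ _ _ _).
        - intros k i; exact (KM n _ _ (He k) (He (S k)) (Hch k) i).
        - intros k i; exact (kl_chain X t1 t2 _ (Good n (hc k) (He k)) i).
        - intros k; exact (proj2 (fix_ok X t1 t2 _ (Good n (hc k) (He k)))).
        - apply lub_exists. intros k; exact (FE n _ (He k)). intros k; exact (FM n _ _ (He k) (He (S k)) (Hch k)).
        - exact KL.
        - exact (proj2 (fix_ok X t1 t2 _ (Good n hl Ehl))). }
      change (is_lub (LEt X t) (LRt X t)
        (fun k => den ACL der2 n P (extend (hc k) f (TArr t1 t2) (fixp X _ (GL n (hc k)))))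
        (den ACL der2 n P (extend hl f (TArr t1 t2) (fixp X _ (GL n hl))))).
      exact (IC n P _ _ (fun k => ext_elem _ _ _ _ _ (He k) (FE n _ (He k)))
               (fun k => ext_le _ _ _ _ _ _ _ (Hch k) (FM n _ _ (He k) (He (S k)) (Hch k)))
               (ext_lub _ _ _ _ _ _ _ Hl FL)).
  -
    destruct IHder as [A0 [B0 C0]]. split; [|split].
    + intros n0 P h Hh; exact (A0 n _ h Hh).
    + intros n0 P h1 h2 E1 E2 H12; exact (B0 n _ h1 h2 E1 E2 H12).
    + intros n0 P hc hl He Hch Hl; exact (C0 n _ hc hl He Hch Hl).
  -
    destruct IHder as [A0 [B0 C0]]. split; [|split].
    + intros n P h Hh; exact (A0 n _ h Hh).
    + intros n P h1 h2 E1 E2 H12; exact (B0 n _ h1 h2 E1 E2 H12).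
    + intros n P hc hl He Hch Hl; exact (C0 n _ hc hl He Hch Hl).
  -
    destruct IHder as [A0 [B0 C0]]. split; [|split].
    + intros n P h Hh; cbn [den]. destruct (excluded_middle_informative _); [exact (A0 n _ h Hh)|exact I].
    + intros n P h1 h2 E1 E2 H12; cbn [den]. destruct (excluded_middle_informative _);
        [exact (B0 n _ h1 h2 E1 E2 H12)|apply LRt_refl].
    + intros n P hc hl He Hch Hl; cbn [den]. destruct (excluded_middle_informative _);
        [exact (C0 n _ hc hl He Hch Hl)|apply const_lubT; exact I].
  -
    destruct IHder1 as [A1 [B1 C1]], IHder2 as [A2 [B2 C2]]. split; [|split].
    + intros n P h Hh; cbn [den]. destruct (excluded_middle_informative _); [exact (A1 n _ h Hh)|exact (A2 n _ h Hh)].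
    + intros n P h1 h2 E1 E2 H12; cbn [den]. destruct (excluded_middle_informative _);
        [exact (B1 n _ h1 h2 E1 E2 H12)|exact (B2 n _ h1 h2 E1 E2 H12)].
    + intros n P hc hl He Hch Hl; cbn [den]. destruct (excluded_middle_informative _);
        [exact (C1 n _ hc hl He Hch Hl)|exact (C2 n _ hc hl He Hch Hl)].
Qed.

Lemma den_good D f x e1 t1 t2 (der1 : has_type (upd (upd D f (TArr t1 t2)) x t1) e1 t2) n (h : env X D) :
  envelem h -> goodG X (TArr t1 t2) (fun g => (fun P' dd => den ACL der1 n P' (extend (extend h f (TArr t1 t2) g) x t1 dd)) : raw X (TArr t1 t2)).
Proof.
  destruct (den_props _ _ _ der1) as [HA [HB HC]]. intros Hh.
    pose (GL := fun n (h : env X D) (g : raw X (TArr t1 t2)) =>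
       (fun P' dd => den ACL der1 n P' (extend (extend h f (TArr t1 t2) g) x t1 dd)) : raw X (TArr t1 t2)).
    assert (ee : forall (h : env X D) g d, envelem h -> elem X _ g -> elem X t1 d ->
                 envelem (extend (extend h f (TArr t1 t2) g) x t1 d))
      by (intros; apply ext_elem; [apply ext_elem|]; auto).
    change (goodG X _ (GL n h)).

      assert (E1 : forall g, elem X _ g -> elem X _ (GL n h g)).
      { intros g Eg P'. split; [|split].
        - intros d Hd; exact (HA n P' _ (ee h g d Hh Eg Hd)).
        - intros d d' Hd Hd' Hle; exact (HB n P' _ _ (ee h g d Hh Eg Hd) (ee h g d' Hh Eg Hd')
              (ext_le _ _ _ _ _ _ _ (envle_refl _ _) Hle)).
        - intros c l Hc Hch Hl. exact (HC n P' (fun k => extend (extend h f _ g) x t1 (c k)) _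
              (fun k => ee h g (c k) Hh Eg (Hc k)) (fun k => ext_le _ _ _ _ _ _ _ (envle_refl _ _) (Hch k))
              (ext_lub _ _ _ _ _ _ _ (envlub_const _ _ (ext_elem _ _ _ _ _ Hh Eg)) Hl)). }
      split; [exact E1|split].
      - intros g g' Eg Eg' Hle P' d Hd. exact (HB n P' _ _ (ee h g d Hh Eg Hd) (ee h g' d Hh Eg' Hd)
          (ext_le _ _ _ _ _ _ _ (ext_le _ _ _ _ _ _ _ (envle_refl _ h) Hle) (le_refl X t1 d))).
      - intros c l Hc Hch Hl. apply arrow_assemble. apply E1; exact (lub_E _ _ _ _ _ Hl).
        intros P' d Hd. exact (HC n P' (fun k => extend (extend h f _ (c k)) x t1 d) _
          (fun k => ee h (c k) d Hh (Hc k) Hd)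
          (fun k => ext_le _ _ _ _ _ _ _ (ext_le _ _ _ _ _ _ _ (envle_refl _ h) (Hch k)) (le_refl X t1 d))
          (ext_lub _ _ _ _ _ _ _ (ext_lub _ _ _ _ _ _ _ (envlub_const _ h Hh) Hl) (lub_const _ _ _ (le_refl X t1) d Hd))). Qed.

End DenS.

Section SDenS.
Variables Principal Privilege : Type.
Variable ACL : Principal -> Pset Privilege.
Notation X := (stack Principal Privilege).

Definition SA D e t (der : has_type D e t) := forall St (h : env X D), envelem h -> LEt X t (sden ACL der St h).
Definition SB D e t (der : has_type D e t) := forall St (h1 h2 : env X D), envelem h1 -> envelem h2 -> envle X h1 h2 ->
  LRt X t (sden ACL der St h1) (sden ACL der St h2).
Definition SC D e t (der : has_type D e t) := forall St (hc : nat -> env X D) hl, (forall k, envelem (hc k)) ->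
  (forall k, envle X (hc k) (hc (S k))) -> envlub X hc hl ->
  is_lub (LEt X t) (LRt X t) (fun k => sden ACL der St (hc k)) (sden ACL der St hl).

Arguments SA {D e t} der. Arguments SB {D e t} der. Arguments SC {D e t} der.

Theorem sden_props D e t (der : has_type D e t) : SA der /\ SB der /\ SC der.
Proof.
  induction der.
  all: unfold SA, SB, SC in *.
  -
    split; [|split].
    + intros; exact I.
    + intros; apply LRt_refl.
    + intros; apply const_lubT; exact I.
  -
    split; [|split].
    + intros St h Hh; exact (var_gen X t (D x) (h x) e (Hh x)).
    + intros St h1 h2 _ _ H12; exact (var_le_gen X t (D x) (h1 x) (h2 x) e (H12 x)).
    + intros St hc hl _ _ Hl.
      exact (val_lubT X t (fun k => eq_rect (D x) (envty X) (hc k x) (Some t) e) _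
               (var_lub_gen X t (D x) (fun k => hc k x) (hl x) e (Hl x))).
  -
    destruct IHder1 as [A1 [B1 C1]], IHder2 as [A2 [B2 C2]], IHder3 as [A3 [B3 C3]].
    split; [|split].
    + intros St h Hh; cbn [sden]. apply bind_elemT. exact (A1 St h Hh).
      intros b _; destruct b; [exact (A2 St h Hh)|exact (A3 St h Hh)].
    + intros St h1 h2 E1 E2 H12; cbn [sden]. apply bind_monoT.
      exact (A1 St h1 E1). exact (A1 St h2 E2). exact (B1 St h1 h2 E1 E2 H12).
      intros b b' _ _ Hbb; simpl in Hbb; subst b'; destruct b;
        [exact (B2 St h1 h2 E1 E2 H12)|exact (B3 St h1 h2 E1 E2 H12)].
    + intros St hc hl He Hch Hl; cbn [sden].
      apply (bind_lubT X TBool t (fun k => sden ACL der1 St (hc k)) _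
        (fun k b => if b then sden ACL der2 St (hc k) else sden ACL der3 St (hc k))
        (fun b => if b then sden ACL der2 St hl else sden ACL der3 St hl)).
      * intros k; exact (A1 St _ (He k)).
      * intros k; exact (B1 St _ _ (He k) (He (S k)) (Hch k)).
      * exact (C1 St hc hl He Hch Hl).
      * intros k b _; destruct b; [exact (A2 St _ (He k))|exact (A3 St _ (He k))].
      * intros k b b' _ _ Hbb; simpl in Hbb; subst b'; destruct b;
          [exact (B2 St _ _ (He k) (He (S k)) (Hch k))|exact (B3 St _ _ (He k) (He (S k)) (Hch k))].
      * intros N ac al Hac Hch' Hal.
        assert (Hce : forall j, ac j = al) by (intros j; exact (lub_ub _ _ _ _ _ j Hal)).
        apply (lub_ext _ _ _ (LRt_refl X t) (LRt_trans X t)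
                 (fun j => if al then sden ACL der2 St (hc (N + j)) else sden ACL der3 St (hc (N + j)))).
        intros j; rewrite Hce; apply LRt_refl.
        intros j; rewrite Hce; apply LRt_refl.
        destruct al.
        exact (C2 St (fun j => hc (N + j)) hl (fun j => He (N + j)) (envchain_shift X D hc Hch N)
                 (envlub_shift X hc hl N He Hch Hl)).
        exact (C3 St (fun j => hc (N + j)) hl (fun j => He (N + j)) (envchain_shift X D hc Hch N)
                 (envlub_shift X hc hl N He Hch Hl)).
  -
    destruct IHder as [A0 [B0 C0]].
    assert (LA : forall (h : env X D), envelem h -> elem X (TArr t1 t2) (fun P' dd => sden ACL der P' (extend h x t1 dd))).
    { intros h Hh P'. split; [|split].
      - intros d Hd; exact (A0 P' _ (ext_elem _ _ _ _ _ Hh Hd)).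
      - intros d d' Hd Hd' Hle; exact (B0 P' _ _ (ext_elem _ _ _ _ _ Hh Hd) (ext_elem _ _ _ _ _ Hh Hd')
                                         (ext_le _ _ _ _ _ _ _ (envle_refl _ h) Hle)).
      - intros c l Hc Hch Hl; exact (C0 P' (fun k => extend h x t1 (c k)) _ (fun k => ext_elem _ _ _ _ _ Hh (Hc k))
           (fun k => ext_le _ _ _ _ _ _ _ (envle_refl _ h) (Hch k)) (ext_lub _ _ _ _ _ _ _ (envlub_const _ h Hh) Hl)). }
    split; [|split].
    + intros St h Hh; exact (LA h Hh).
    + intros St h1 h2 E1 E2 H12; cbn [sden]. intros P' d Hd.
      exact (B0 P' _ _ (ext_elem _ _ _ _ _ E1 Hd) (ext_elem _ _ _ _ _ E2 Hd) (ext_le _ _ _ _ _ _ _ H12 (le_refl X t1 d))).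
    + intros St hc hl He Hch Hl; cbn [sden].
      apply (val_lubT X (TArr t1 t2) (fun k => fun P' dd => sden ACL der P' (extend (hc k) x t1 dd))).
      apply arrow_assemble. exact (LA hl (envlub_elem _ _ _ Hl)).
      intros P' d Hd.
      exact (C0 P' (fun k => extend (hc k) x t1 d) _ (fun k => ext_elem _ _ _ _ _ (He k) Hd)
               (fun k => ext_le _ _ _ _ _ _ _ (Hch k) (le_refl X t1 d))
               (ext_lub _ _ _ _ _ _ _ Hl (lub_const _ _ _ (le_refl X t1) d Hd))).
  -
    destruct IHder1 as [A1 [B1 C1]], IHder2 as [A2 [B2 C2]].
    split; [|split].
    + intros St h Hh; cbn [sden]. apply bind_elemT. exact (A1 St h Hh).
      intros fv Efv. apply bind_elemT. exact (A2 St h Hh).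
      intros a Ea; exact (proj1 (Efv St) a Ea).
    + intros St h1 h2 E1 E2 H12; cbn [sden]. apply bind_monoT.
      exact (A1 St h1 E1). exact (A1 St h2 E2). exact (B1 St h1 h2 E1 E2 H12).
      intros fv fv' Efv Efv' Hff. apply bind_monoT.
      exact (A2 St h1 E1). exact (A2 St h2 E2). exact (B2 St h1 h2 E1 E2 H12).
      intros a a' Ea Ea' Haa. apply LRt_trans with (fv St a').
      exact (proj1 (proj2 (Efv St)) a a' Ea Ea' Haa). exact (Hff St a' Ea').
    + intros St hc hl He Hch Hl; cbn [sden].
      apply (bind_lubT X (TArr t1 t2) t2 (fun k => sden ACL der1 St (hc k)) _
        (fun k fv => bind (sden ACL der2 St (hc k)) (fun a => fv St a))
        (fun fv => bind (sden ACL der2 St hl) (fun a => fv St a))).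
      * intros k; exact (A1 St _ (He k)).
      * intros k; exact (B1 St _ _ (He k) (He (S k)) (Hch k)).
      * exact (C1 St hc hl He Hch Hl).
      * intros k fv Efv; apply bind_elemT. exact (A2 St _ (He k)).
        intros a Ea; exact (proj1 (Efv St) a Ea).
      * intros k fv fv' Efv Efv' Hff. apply bind_monoT.
        exact (A2 St _ (He k)). exact (A2 St _ (He (S k))). exact (B2 St _ _ (He k) (He (S k)) (Hch k)).
        intros a a' Ea Ea' Haa. apply LRt_trans with (fv St a').
        exact (proj1 (proj2 (Efv St)) a a' Ea Ea' Haa). exact (Hff St a' Ea').
      * intros N fc fl Efc Hfch Hfl.
        apply (bind_lubT X t1 t2 (fun j => sden ACL der2 St (hc (N + j))) _ (fun j a => fc j St a) (fun a => fl St a)).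
        -- intros j; exact (A2 St _ (He (N + j))).
        -- intros j; exact (B2 St _ _ (He (N + j)) (He (N + S j)) (envchain_shift X D hc Hch N j)).
        -- exact (C2 St (fun j => hc (N + j)) hl (fun j => He (N + j)) (envchain_shift X D hc Hch N)
                 (envlub_shift X hc hl N He Hch Hl)).
        -- intros j a Ea; exact (proj1 (Efc j St) a Ea).
        -- intros j a a' Ea Ea' Haa. apply LRt_trans with (fc j St a').
           exact (proj1 (proj2 (Efc j St)) a a' Ea Ea' Haa). exact (Hfch j St a' Ea').
        -- intros N' bc bl Ebc Hbch Hbl.
           assert (Ebl : elem X t1 bl) by exact (lub_E _ _ _ _ _ Hbl).
           refine (diag_lub _ (LEt X t2) (LRt X t2) (LRt_refl X t2) (LRt_trans X t2)
                    (fun k i => fc (N' + k) St (bc i)) _ _ (fun k => fc (N' + k) St bl) _ _ _).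
           ++ intros k i; simpl. rewrite Nat.add_succ_r. exact (Hfch (N' + k) St (bc i) (Ebc i)).
           ++ intros k i; exact (proj1 (proj2 (Efc (N' + k) St)) _ _ (Ebc i) (Ebc (S i)) (Hbch i)).
           ++ intros k; exact (proj2 (proj2 (Efc (N' + k) St)) bc bl Ebc Hbch Hbl).
           ++ apply (lubT_shift X t2 (fun k => fc k St bl)). intros k; exact (Hfch k St bl Ebl).
              exact (arrow_pointwise X t1 t2 fc fl Efc Hfch Hfl St bl Ebl).
  -
    destruct IHder1 as [HA [HB HC]], IHder2 as [IA [IB IC]].
    pose (GL := fun (h : env X D) (g : raw X (TArr t1 t2)) =>
       (fun P' dd => sden ACL der1 P' (extend (extend h f (TArr t1 t2) g) x t1 dd)) : raw X (TArr t1 t2)).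
    assert (ee : forall (h : env X D) g d, envelem h -> elem X _ g -> elem X t1 d ->
                 envelem (extend (extend h f (TArr t1 t2) g) x t1 d))
      by (intros; apply ext_elem; [apply ext_elem|]; auto).
    assert (Good : forall h, envelem h -> goodG X _ (GL h)).
    { intros h Hh.
      assert (E1 : forall g, elem X _ g -> elem X _ (GL h g)).
      { intros g Eg P'. split; [|split].
        - intros d Hd; exact (HA P' _ (ee h g d Hh Eg Hd)).
        - intros d d' Hd Hd' Hle; exact (HB P' _ _ (ee h g d Hh Eg Hd) (ee h g d' Hh Eg Hd')
              (ext_le _ _ _ _ _ _ _ (envle_refl _ _) Hle)).
        - intros c l Hc Hch Hl. exact (HC P' (fun k => extend (extend h f _ g) x t1 (c k)) _
              (fun k => ee h g (c k) Hh Eg (Hc k)) (fun k => ext_le _ _ _ _ _ _ _ (envle_refl _ _) (Hch k))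
              (ext_lub _ _ _ _ _ _ _ (envlub_const _ _ (ext_elem _ _ _ _ _ Hh Eg)) Hl)). }
      split; [exact E1|split].
      - intros g g' Eg Eg' Hle P' d Hd. exact (HB P' _ _ (ee h g d Hh Eg Hd) (ee h g' d Hh Eg' Hd)
          (ext_le _ _ _ _ _ _ _ (ext_le _ _ _ _ _ _ _ (envle_refl _ h) Hle) (le_refl X t1 d))).
      - intros c l Hc Hch Hl. apply arrow_assemble. apply E1; exact (lub_E _ _ _ _ _ Hl).
        intros P' d Hd. exact (HC P' (fun k => extend (extend h f _ (c k)) x t1 d) _
          (fun k => ee h (c k) d Hh (Hc k) Hd)
          (fun k => ext_le _ _ _ _ _ _ _ (ext_le _ _ _ _ _ _ _ (envle_refl _ h) (Hch k)) (le_refl X t1 d))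
          (ext_lub _ _ _ _ _ _ _ (ext_lub _ _ _ _ _ _ _ (envlub_const _ h Hh) Hl) (lub_const _ _ _ (le_refl X t1) d Hd))). }
    assert (KM : forall h1 h2, envelem h1 -> envelem h2 -> envle X h1 h2 ->
               forall i, le X _ (kl X t1 t2 (GL h1) i) (kl X t1 t2 (GL h2) i)).
    { intros h1 h2 E1 E2 H12 i; induction i.
      - apply le_refl.
      - intros P' d Hd.
        exact (HB P' _ _ (ee h1 _ d E1 (kl_elem X t1 t2 _ (Good h1 E1) i) Hd)
                 (ee h2 _ d E2 (kl_elem X t1 t2 _ (Good h2 E2) i) Hd)
                 (ext_le _ _ _ _ _ _ _ (ext_le _ _ _ _ _ _ _ H12 IHi) (le_refl X t1 d))). }
    assert (FM : forall h1 h2, envelem h1 -> envelem h2 -> envle X h1 h2 ->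
               le X _ (fixp X _ (GL h1)) (fixp X _ (GL h2))).
    { intros h1 h2 E1 E2 H12.
      exact (lub_mono _ _ _ (le_refl X _) (le_trans X _) _ _ _ _ (KM h1 h2 E1 E2 H12)
               (proj2 (fix_ok X t1 t2 _ (Good h1 E1))) (proj2 (fix_ok X t1 t2 _ (Good h2 E2)))). }
    assert (FE : forall h, envelem h -> elem X _ (fixp X _ (GL h)))
      by (intros h Hh; exact (proj1 (proj1 (fix_ok X t1 t2 _ (Good h Hh))))).
    split; [|split].
    + intros St h Hh.
      change (LEt X t (sden ACL der2 St (extend h f (TArr t1 t2) (fixp X _ (GL h))))).
      exact (IA St _ (ext_elem _ _ _ _ _ Hh (FE h Hh))).
    + intros St h1 h2 E1 E2 H12.
      change (LRt X t (sden ACL der2 St (extend h1 f (TArr t1 t2) (fixp X _ (GL h1))))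
                      (sden ACL der2 St (extend h2 f (TArr t1 t2) (fixp X _ (GL h2))))).
      exact (IB St _ _ (ext_elem _ _ _ _ _ E1 (FE h1 E1)) (ext_elem _ _ _ _ _ E2 (FE h2 E2))
               (ext_le _ _ _ _ _ _ _ H12 (FM h1 h2 E1 E2 H12))).
    + intros St hc hl He Hch Hl.
      assert (Ehl := envlub_elem _ _ _ Hl).
      assert (KL : forall i, is_lub (elem X _) (le X _) (fun k => kl X t1 t2 (GL (hc k)) i) (kl X t1 t2 (GL hl) i)).
      { induction i.
        - exact (lub_const _ _ _ (le_refl X _) _ (botf_elem X t1 t2)).
        - apply arrow_assemble. exact (kl_elem X t1 t2 _ (Good hl Ehl) (S i)).
          intros P' d Hd.
          exact (HC P' (fun k => extend (extend (hc k) f _ (kl X t1 t2 (GL (hc k)) i)) x t1 d) _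
            (fun k => ee (hc k) _ d (He k) (kl_elem X t1 t2 _ (Good (hc k) (He k)) i) Hd)
            (fun k => ext_le _ _ _ _ _ _ _ (ext_le _ _ _ _ _ _ _ (Hch k) (KM _ _ (He k) (He (S k)) (Hch k) i)) (le_refl X t1 d))
            (ext_lub _ _ _ _ _ _ _ (ext_lub _ _ _ _ _ _ _ Hl IHi) (lub_const _ _ _ (le_refl X t1) d Hd))). }
      assert (FL : is_lub (elem X _) (le X _) (fun k => fixp X _ (GL (hc k))) (fixp X _ (GL hl))).
      { refine (diag_swap _ _ _ (le_refl X _) (le_trans X _) (fun k i => kl X t1 t2 (GL (hc k)) i)
                  (fun k => fixp X _ (GL (hc k))) (fun i => kl X t1 t2 (GL hl) i) (fixp X _ (GL hl)) _ _ _ _ _ _).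
        - intros k i; exact (KM _ _ (He k) (He (S k)) (Hch k) i).
        - intros k i; exact (kl_chain X t1 t2 _ (Good (hc k) (He k)) i).
        - intros k; exact (proj2 (fix_ok X t1 t2 _ (Good (hc k) (He k)))).
        - apply lub_exists. intros k; exact (FE _ (He k)). intros k; exact (FM _ _ (He k) (He (S k)) (Hch k)).
        - exact KL.
        - exact (proj2 (fix_ok X t1 t2 _ (Good hl Ehl))). }
      change (is_lub (LEt X t) (LRt X t)
        (fun k => sden ACL der2 St (extend (hc k) f (TArr t1 t2) (fixp X _ (GL (hc k)))))
        (sden ACL der2 St (extend hl f (TArr t1 t2) (fixp X _ (GL hl))))).
      exact (IC St _ _ (fun k => ext_elem _ _ _ _ _ (He k) (FE _ (He k)))
               (fun k => ext_le _ _ _ _ _ _ _ (Hch k) (FM _ _ (He k) (He (S k)) (Hch k)))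
               (ext_lub _ _ _ _ _ _ _ Hl FL)).
  -
    destruct IHder as [A0 [B0 C0]]. split; [|split].
    + intros St h Hh; exact (A0 _ h Hh).
    + intros St h1 h2 E1 E2 H12; exact (B0 _ h1 h2 E1 E2 H12).
    + intros St hc hl He Hch Hl; exact (C0 _ hc hl He Hch Hl).
  -
    destruct IHder as [A0 [B0 C0]]. split; [|split].
    + intros St h Hh; cbn [sden]; destruct (stop St); exact (A0 _ h Hh).
    + intros St h1 h2 E1 E2 H12; cbn [sden]; destruct (stop St); exact (B0 _ h1 h2 E1 E2 H12).
    + intros St hc hl He Hch Hl; cbn [sden]; destruct (stop St); exact (C0 _ hc hl He Hch Hl).
  -
    destruct IHder as [A0 [B0 C0]]. split; [|split].
    + intros St h Hh; cbn [sden]. destruct (excluded_middle_informative _); [exact (A0 _ h Hh)|exact I].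
    + intros St h1 h2 E1 E2 H12; cbn [sden]. destruct (excluded_middle_informative _);
        [exact (B0 _ h1 h2 E1 E2 H12)|apply LRt_refl].
    + intros St hc hl He Hch Hl; cbn [sden]. destruct (excluded_middle_informative _);
        [exact (C0 _ hc hl He Hch Hl)|apply const_lubT; exact I].
  -
    destruct IHder1 as [A1 [B1 C1]], IHder2 as [A2 [B2 C2]]. split; [|split].
    + intros St h Hh; cbn [sden]. destruct (excluded_middle_informative _); [exact (A1 _ h Hh)|exact (A2 _ h Hh)].
    + intros St h1 h2 E1 E2 H12; cbn [sden]. destruct (excluded_middle_informative _);
        [exact (B1 _ h1 h2 E1 E2 H12)|exact (B2 _ h1 h2 E1 E2 H12)].
    + intros St hc hl He Hch Hl; cbn [sden]. destruct (excluded_middle_informative _);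
        [exact (C1 _ hc hl He Hch Hl)|exact (C2 _ hc hl He Hch Hl)].
Qed.

Lemma sden_good D f x e1 t1 t2 (der1 : has_type (upd (upd D f (TArr t1 t2)) x t1) e1 t2) (h : env X D) :
  envelem h -> goodG X (TArr t1 t2) (fun g => (fun P' dd => sden ACL der1 P' (extend (extend h f (TArr t1 t2) g) x t1 dd)) : raw X (TArr t1 t2)).
Proof.
  destruct (sden_props _ _ _ der1) as [HA [HB HC]]. intros Hh.
    pose (GL := fun (h : env X D) (g : raw X (TArr t1 t2)) =>
       (fun P' dd => sden ACL der1 P' (extend (extend h f (TArr t1 t2) g) x t1 dd)) : raw X (TArr t1 t2)).
    assert (ee : forall (h : env X D) g d, envelem h -> elem X _ g -> elem X t1 d ->
                 envelem (extend (extend h f (TArr t1 t2) g) x t1 d))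
      by (intros; apply ext_elem; [apply ext_elem|]; auto).
    change (goodG X _ (GL h)).

      assert (E1 : forall g, elem X _ g -> elem X _ (GL h g)).
      { intros g Eg P'. split; [|split].
        - intros d Hd; exact (HA P' _ (ee h g d Hh Eg Hd)).
        - intros d d' Hd Hd' Hle; exact (HB P' _ _ (ee h g d Hh Eg Hd) (ee h g d' Hh Eg Hd')
              (ext_le _ _ _ _ _ _ _ (envle_refl _ _) Hle)).
        - intros c l Hc Hch Hl. exact (HC P' (fun k => extend (extend h f _ g) x t1 (c k)) _
              (fun k => ee h g (c k) Hh Eg (Hc k)) (fun k => ext_le _ _ _ _ _ _ _ (envle_refl _ _) (Hch k))
              (ext_lub _ _ _ _ _ _ _ (envlub_const _ _ (ext_elem _ _ _ _ _ Hh Eg)) Hl)). }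
      split; [exact E1|split].
      - intros g g' Eg Eg' Hle P' d Hd. exact (HB P' _ _ (ee h g d Hh Eg Hd) (ee h g' d Hh Eg' Hd)
          (ext_le _ _ _ _ _ _ _ (ext_le _ _ _ _ _ _ _ (envle_refl _ h) Hle) (le_refl X t1 d))).
      - intros c l Hc Hch Hl. apply arrow_assemble. apply E1; exact (lub_E _ _ _ _ _ Hl).
        intros P' d Hd. exact (HC P' (fun k => extend (extend h f _ (c k)) x t1 d) _
          (fun k => ee h (c k) d Hh (Hc k) Hd)
          (fun k => ext_le _ _ _ _ _ _ _ (ext_le _ _ _ _ _ _ _ (envle_refl _ h) (Hch k)) (le_refl X t1 d))
          (ext_lub _ _ _ _ _ _ _ (ext_lub _ _ _ _ _ _ _ (envlub_const _ h Hh) Hl) (lub_const _ _ _ (le_refl X t1) d Hd))). Qed.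

End SDenS.

Section Main.
Variables Principal Privilege : Type.
Variable ACL : Principal -> Pset Privilege.
Notation XP := (Pset Privilege).
Notation XS := (stack Principal Privilege).

Lemma simlift_lub t (IH : forall c c' l l', (forall k, elem XP t (c k)) -> chain (le XP t) c -> is_lub (elem XP t) (le XP t) c l ->
     (forall k, elem XS t (c' k)) -> chain (le XS t) c' -> is_lub (elem XS t) (le XS t) c' l' ->
     (forall k, simv ACL t (c k) (c' k)) -> simv ACL t l l')
  (u : nat -> lift (raw XP t)) ul (u' : nat -> lift (raw XS t)) ul' :
  (forall k, LEt XP t (u k)) -> (forall k, LRt XP t (u k) (u (S k))) -> is_lub (LEt XP t) (LRt XP t) u ul ->
  (forall k, LEt XS t (u' k)) -> (forall k, LRt XS t (u' k) (u' (S k))) -> is_lub (LEt XS t) (LRt XS t) u' ul' ->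
  (forall k, simlift (simv ACL t) (u k) (u' k)) -> simlift (simv ACL t) ul ul'.
Proof.
  intros Eu Cu Lu Eu' Cu' Lu' Hs.
  destruct ul as [| |f].
  - pose proof (llub_bot _ _ _ _ Lu) as Hb.
    assert (Hb' : forall k, u' k = Bot).
    { intros k; specialize (Hs k); rewrite Hb in Hs; destruct (u' k); simpl in Hs; tauto. }
    destruct Lu' as [_ [_ H3]].
    assert (LRt XS t ul' Bot) as Hl.
    { apply H3. exact I. intros k; rewrite Hb'; simpl; exact I. }
    destruct ul'; simpl in *; tauto.
  - destruct (llub_star _ _ _ _ Lu) as [K HK].
    assert (HK' : u' K = Star).
    { specialize (Hs K); rewrite HK in Hs; destruct (u' K); simpl in Hs; tauto. }
    rewrite (llub_star_of _ _ _ _ _ _ HK' Lu'); simpl; exact I.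
  - destruct (llub_val _ _ _ _ _ Lu) as [K [a HK]].
    assert (Hs' := Hs K). rewrite HK in Hs'.
    destruct (u' K) as [| |a'] eqn:HK'; simpl in Hs'; try tauto.
    destruct (llub_val_of _ _ _ _ _ _ _ HK' Lu') as [f' ->].
    destruct (llub_vals _ _ _ (le_refl XP t) (le_trans XP t) _ _ _ _ Cu Eu Lu HK) as [Hv [Hae [Hac Hal]]].
    destruct (llub_vals _ _ _ (le_refl XS t) (le_trans XS t) _ _ _ _ Cu' Eu' Lu' HK') as [Hv' [Hae' [Hac' Hal']]].
    simpl. apply (IH _ _ _ _ Hae Hac Hal Hae' Hac' Hal').
    intros j. specialize (Hs (K + j)). rewrite (Hv j), (Hv' j) in Hs. exact Hs.
Qed.

Lemma simv_lub t : forall c c' l l', (forall k, elem XP t (c k)) -> chain (le XP t) c -> is_lub (elem XP t) (le XP t) c l ->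
     (forall k, elem XS t (c' k)) -> chain (le XS t) c' -> is_lub (elem XS t) (le XS t) c' l' ->
     (forall k, simv ACL t (c k) (c' k)) -> simv ACL t l l'.
Proof.
  induction t as [|t1 IH1 t2 IH2].
  - intros c c' l l' _ _ Hl _ _ Hl' Hs. simpl in *.
    pose proof (lub_ub _ _ _ _ _ 0 Hl) as H0. pose proof (lub_ub _ _ _ _ _ 0 Hl') as H0'.
    simpl in H0, H0'. rewrite <- H0, <- H0'. apply Hs.
  - intros c c' l l' Ec Cc Hl Ec' Cc' Hl' Hs St d d' Ed Ed' Hdd.
    apply (simlift_lub t2 IH2 (fun k => c k (privs ACL St) d) _ (fun k => c' k St d') _).
    + intros k; exact (proj1 (Ec k (privs ACL St)) d Ed).
    + intros k; exact (Cc k (privs ACL St) d Ed).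
    + exact (arrow_pointwise XP t1 t2 c l Ec Cc Hl _ d Ed).
    + intros k; exact (proj1 (Ec' k St) d' Ed').
    + intros k; exact (Cc' k St d' Ed').
    + exact (arrow_pointwise XS t1 t2 c' l' Ec' Cc' Hl' _ d' Ed').
    + intros k; exact (Hs k St d d' Ed Ed' Hdd).
Qed.

Definition osim (o : option ty) : envty XP o -> envty XS o -> Prop :=
  match o return envty XP o -> envty XS o -> Prop with Some t => simv ACL t | None => fun _ _ => True end.

Lemma simv_var_gen t : forall o (v : envty XP o) (v' : envty XS o) (H : o = Some t), osim o v v' ->
  simv ACL t (eq_rect o (envty XP) v (Some t) H) (eq_rect o (envty XS) v' (Some t) H).
Proof. intros o v v' H; subst; simpl; auto. Qed.

Lemma simenv_ext D (h : env XP D) (h' : env XS D) x t d d' :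
  simenv ACL h h' -> simv ACL t d d' -> simenv ACL (extend h x t d) (extend h' x t d').
Proof. intros H Hd y. unfold extend, upd. destruct (Nat.eq_dec y x); [exact Hd|apply H]. Qed.

Theorem main D e t (der : has_type D e t) : standard e ->
  forall St n (h : env XP D) (h' : env XS D), (is_signs e \/ n = fst (stop St)) ->
  envelem h -> envelem h' -> simenv ACL h h' ->
  sim ACL t (den ACL der n (privs ACL St) h) (sden ACL der St h').
Proof.
  induction der; intros Hstd St n0 h h' Hn Eh Eh' Hs.
  - simpl. reflexivity.
  - exact (simv_var_gen t (D x) (h x) (h' x) e (Hs x)).
  -
    destruct Hstd as [S0 [S1 S2]]. destruct Hn as [[]|Hn].
    pose proof (IHder1 S0 St n0 h h' (or_intror Hn) Eh Eh' Hs) as H0. unfold sim in H0 |- *. cbn [den sden].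
    destruct (den ACL der1 n0 (privs ACL St) h) as [| |b]; destruct (sden ACL der1 St h') as [| |b'];
      simpl in H0; try contradiction; try (simpl; exact I).
    subst b'. destruct b; [exact (IHder2 S1 St n0 h h' (or_intror Hn) Eh Eh' Hs)|exact (IHder3 S2 St n0 h h' (or_intror Hn) Eh Eh' Hs)].
  -
    destruct Hstd as [Hsig Hst]. cbn [den sden]. simpl. intros St0 d d' Ed Ed' Hdd.
    exact (IHder Hst St0 n0 _ _ (or_introl Hsig) (ext_elem _ _ _ _ _ Eh Ed) (ext_elem _ _ _ _ _ Eh' Ed')
             (simenv_ext _ _ _ _ _ _ _ Hs Hdd)).
  -
    destruct Hstd as [S1 S2]. destruct Hn as [[]|Hn].
    pose proof (IHder1 S1 St n0 h h' (or_intror Hn) Eh Eh' Hs) as H1.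
    pose proof (IHder2 S2 St n0 h h' (or_intror Hn) Eh Eh' Hs) as H2.
    pose proof (proj1 (den_props _ _ ACL _ _ _ der2) n0 (privs ACL St) h Eh) as E2.
    pose proof (proj1 (sden_props _ _ ACL _ _ _ der2) St h' Eh') as E2'.
    unfold sim in H1, H2 |- *. cbn [den sden].
    destruct (den ACL der1 n0 (privs ACL St) h) as [| |fv]; destruct (sden ACL der1 St h') as [| |fv'];
      simpl in H1; try contradiction; try (simpl; exact I).
    destruct (den ACL der2 n0 (privs ACL St) h) as [| |a]; destruct (sden ACL der2 St h') as [| |a'];
      simpl in H2; try contradiction; try (simpl; exact I).
    simpl. exact (H1 St a a' E2 E2' H2).
  -
    destruct Hstd as [Hsig1 [S1 S2]]. destruct Hn as [[]|Hn].
    pose (G := fun g => (fun P' dd => den ACL der1 n0 P' (extend (extend h f (TArr t1 t2) g) x t1 dd)) : raw XP (TArr t1 t2)).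
    pose (G' := fun g => (fun P' dd => sden ACL der1 P' (extend (extend h' f (TArr t1 t2) g) x t1 dd)) : raw XS (TArr t1 t2)).
    assert (HG := den_good _ _ ACL _ _ _ _ _ _ der1 n0 h Eh). change (goodG XP _ G) in HG.
    assert (HG' := sden_good _ _ ACL _ _ _ _ _ _ der1 h' Eh'). change (goodG XS _ G') in HG'.
    assert (Hk : forall i, simv ACL _ (kl XP t1 t2 G i) (kl XS t1 t2 G' i)).
    { induction i.
      - intros St0 d d' _ _ _; simpl; exact I.
      - intros St0 d d' Ed Ed' Hdd.
        exact (IHder1 S1 St0 n0 _ _ (or_introl Hsig1)
          (ext_elem _ _ _ _ _ (ext_elem _ _ _ _ _ Eh (kl_elem XP t1 t2 G HG i)) Ed)
          (ext_elem _ _ _ _ _ (ext_elem _ _ _ _ _ Eh' (kl_elem XS t1 t2 G' HG' i)) Ed')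
          (simenv_ext _ _ _ _ _ _ _ (simenv_ext _ _ _ _ _ _ _ Hs IHi) Hdd)). }
    assert (Hf : simv ACL _ (fixp XP _ G) (fixp XS _ G')).
    { apply (simv_lub _ (kl XP t1 t2 G) (kl XS t1 t2 G')).
      exact (kl_elem XP t1 t2 G HG). exact (kl_chain XP t1 t2 G HG). exact (proj2 (fix_ok XP t1 t2 G HG)).
      exact (kl_elem XS t1 t2 G' HG'). exact (kl_chain XS t1 t2 G' HG'). exact (proj2 (fix_ok XS t1 t2 G' HG')).
      exact Hk. }
    change (sim ACL t (den ACL der2 n0 (privs ACL St) (extend h f (TArr t1 t2) (fixp XP _ G)))
                      (sden ACL der2 St (extend h' f (TArr t1 t2) (fixp XS _ G')))).
    exact (IHder2 S2 St n0 _ _ (or_intror Hn) (ext_elem _ _ _ _ _ Eh (proj1 (proj1 (fix_ok XP t1 t2 G HG))))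
             (ext_elem _ _ _ _ _ Eh' (proj1 (proj1 (fix_ok XS t1 t2 G' HG')))) (simenv_ext _ _ _ _ _ _ _ Hs Hf)).
  -
    destruct St as [[n1 P1] r]. cbn [den sden stop srest].
    assert (Hp : (fun q => privs ACL (MkStack (n1, P1) r) q /\ ACL n q) =
                 privs ACL (MkStack (n, fun _ => False) ((n1, P1) :: r))).
    { apply functional_extensionality; intros q; apply propositional_extensionality.
      unfold privs, scheck; simpl. tauto. }
    rewrite Hp. exact (IHder Hstd (MkStack (n, fun _ => False) ((n1, P1) :: r)) n h h' (or_intror eq_refl) Eh Eh' Hs).
  -
    destruct Hn as [[]|Hn]. destruct St as [[n1 P1] r]. simpl in Hn; subst n0. cbn [den sden stop srest].
    assert (Hp : (fun q => privs ACL (MkStack (n1, P1) r) q \/ (q = p /\ ACL n1 p)) =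
                 privs ACL (MkStack (n1, fun q => P1 q \/ q = p) r)).
    { apply functional_extensionality; intros q; apply propositional_extensionality.
      unfold privs, scheck; simpl. split.
      - intros [[Ha Hx]|[Hq Ha]]. split; [exact Ha|tauto]. subst; split; [exact Ha|left; right; reflexivity].
      - intros [Ha [[Hx|Hq]|Hc]]. left; tauto. right; subst; tauto. left; tauto. }
    rewrite Hp. exact (IHder Hstd (MkStack (n1, fun q => P1 q \/ q = p) r) n1 h h' (or_intror eq_refl) Eh Eh' Hs).
  -
    destruct Hn as [[]|Hn]. cbn [den sden].
    destruct (excluded_middle_informative (privs ACL St p)) as [Hp|Hp];
      destruct (excluded_middle_informative (scheck ACL p St)) as [Hq|Hq].
    exact (IHder Hstd St n0 h h' (or_intror Hn) Eh Eh' Hs). exfalso; exact (Hq Hp). exfalso; exact (Hp Hq). simpl; exact I.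
  -
    destruct Hstd as [S1 S2]. destruct Hn as [[]|Hn]. cbn [den sden].
    destruct (excluded_middle_informative (privs ACL St p)) as [Hp|Hp];
      destruct (excluded_middle_informative (scheck ACL p St)) as [Hq|Hq].
    exact (IHder1 S1 St n0 h h' (or_intror Hn) Eh Eh' Hs). exfalso; exact (Hq Hp). exfalso; exact (Hp Hq).
    exact (IHder2 S2 St n0 h h' (or_intror Hn) Eh Eh' Hs).
Qed.
End Main.

Theorem lemma7 (Principal Privilege : Type) (ACL : Principal -> Pset Privilege)
  (n : Principal) (P' : Pset Privilege) (S : list (Principal * Pset Privilege))
  (D : ctx) (e : exp Principal Privilege) (t : ty) (der : has_type D e t)
  (h : env (Pset Privilege) D) (h' : env (stack Principal Privilege) D) :
  standard e ->
  envelem h -> envelem h' ->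
  simenv ACL h h' ->
  sim ACL t
    (den ACL der n (privs ACL (MkStack (n, P') S)) h)
    (sden ACL der (MkStack (n, P') S) h').
Proof.
  intros Hstd Eh Eh' Hs.
  exact (main _ _ ACL D e t der Hstd (MkStack (n, P') S) n h h' (or_intror eq_refl) Eh Eh' Hs).
Qed.
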